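(* Let $0<\mu_1<\mu_2$, $\alpha\in(0,1)$, $\delta\ge0$, $\sigma\in(0,1/2)$. Let $c_0:[0,+\infty)\to(0,+\infty)$ be of class $C^3$ with $\mu_1\le c_0(t)\le\mu_2$ for all $t\ge0$ and $$\sup_{t\ge0}\big(|c_0'(t)|+|c_0''(t)|+|c_0'''(t)|\big)<+\infty.$$ Let $\{\lambda_n\},\{\varepsilon_n\}$ be sequences of positive reals with $\lambda_n\to+\infty$, $\varepsilon_n\to0$, and $\limsup_{n\to\infty}\varepsilon_n\lambda_n^\alpha<+\infty$. Define $c_n(t):=\gamma(\varepsilon_n,\lambda_n,t)$, where $$\gamma(\varepsilon,\lambda,t):=c_0(t)-\varepsilon\sin(2a)-\frac{\varepsilon^2}{4}\frac{\sin^4 a}{c_0(t)}-\frac{5}{16\lambda^2}\Big[\frac{c_0'(t)}{c_0(t)}\Big]^2+\frac{\varepsilon}{2\lambda}\frac{c_0'(t)}{c_0(t)^{3/2}}\sin^2 a+\frac{1}{4\lambda^2}\frac{c_0''(t)}{c_0(t)}+\frac{\delta^2}{\lambda^{2-4\sigma}},\quad a=a(\lambda,t):=\lambda\int_0^tc_0(s)^{1/2}ds,$$ and let $w_n$ be the solution of $w_n''+2\delta\lambda_n^{2\sigma}w_n'+\lambda_n^2c_n(t)w_n=0$ on $[0,+\infty)$ with $w_n(0)=0$, $w_n'(0)=1$. Set $$\mu_3:=\frac{\mu_1\min\{1,\mu_1\}}{2\mu_2^2},\qquad\mu_4:=\frac{1}{4\mu_2^{1/2}}.$$ Then: (i) $c_n\to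 c_0$ uniformly on $[0,+\infty)$; (ii) $\displaystyle\limsup_{n\to\infty}\operatorname{Hold}_\alpha(c_n)\le\max\Big\{\operatorname{Hold}_\alpha(c_0),\ 2\mu_2^{\alpha/2}\limsup_{n\to\infty}(\varepsilon_n\lambda_n^\alpha)\Big\}$; (iii) for every $n$ large enough, $$|w_n'(t)|^2+\lambda_n^2|w_n(t)|^2\ge\mu_3\exp\big(\mu_4\varepsilon_n\lambda_n t-2\delta\lambda_n^{2\sigma}t\big)\qquad\forall t\ge0.$$
   Context: For $c:[0,+\infty)\to\mathbb{R}$, $\operatorname{Hold}_\alpha(c):=\sup\{|c(t)-c(s)|/|t-s|^\alpha:\ t,s\ge0,\ t\neq s\}$. *)

(* Defs.v *)
From Stdlib Require Import Reals Lra.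
Open Scope R_scope.

Definition deriv_nonneg (f : R -> R) (t l : R) : Prop :=
  forall eps : R, 0 < eps -> exists delta : R, 0 < delta /\
    forall h : R, h <> 0 -> 0 <= t + h -> Rabs h < delta ->
      Rabs ((f (t + h) - f t) / h - l) < eps.

Definition cont_nonneg (f : R -> R) (t : R) : Prop :=
  forall eps : R, 0 < eps -> exists delta : R, 0 < delta /\
    forall s : R, 0 <= s -> Rabs (s - t) < delta -> Rabs (f s - f t) < eps.

(* The set of difference quotients whose supremum is Hold_alpha(c). *)
Definition Hold_set (alpha : R) (c : R -> R) (x : R) : Prop :=
  exists t s : R, 0 <= t /\ 0 <= s /\ t <> s /\
    x = Rabs (c t - c s) / Rpower (Rabs (t - s)) alpha.

Definition is_limsup (u : nat -> R) (L : R) : Prop :=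
  forall eta : R, 0 < eta ->
    (exists N : nat, forall n : nat, (N <= n)%nat -> u n <= L + eta) /\
    (forall N : nat, exists n : nat, (N <= n)%nat /\ L - eta <= u n).

(* gamma(eps, lam, t), with c1 = c0', c2 = c0'', and A t = int_0^t c0(s)^{1/2} ds,
   so a(lam, t) = lam * A t. *)
Definition gamma (c0 c1 c2 A : R -> R) (delta sigma eps lam t : R) : R :=
  let a := lam * A t in
  c0 t - eps * sin (2 * a)
  - eps ^ 2 / 4 * (sin a ^ 4 / c0 t)
  - 5 / (16 * lam ^ 2) * (c1 t / c0 t) ^ 2
  + eps / (2 * lam) * (c1 t / (c0 t * sqrt (c0 t))) * sin a ^ 2
  + 1 / (4 * lam ^ 2) * (c2 t / c0 t)
  + delta ^ 2 / Rpower lam (2 - 4 * sigma).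

(* Main.v *)
Require Import Defs.
From Stdlib Require Import Reals Lra Psatz.
Open Scope R_scope.

Notation dpl := derivable_pt_lim.

Definition ext (f : R -> R) (l0 : R) (t : R) : R :=
  if Rle_dec 0 t then f t else f 0 + l0 * t.

Lemma ext_eq f l0 t : 0 <= t -> ext f l0 t = f t.
Proof. intros H; unfold ext; destruct (Rle_dec 0 t); lra. Qed.

Lemma ext_D f f' : (forall t, 0 <= t -> deriv_nonneg f t (f' t)) ->
  forall t, 0 <= t -> dpl (ext f (f' 0)) t (f' t).
Proof.
  intros Hd t Ht eps Heps. destruct (Hd t Ht eps Heps) as [del [Hdel H]].
  destruct (Rle_lt_or_eq_dec 0 t Ht) as [Hp|H0].
  - assert (Hm : 0 < Rmin del t) by (apply Rmin_pos; lra).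
    exists (mkposreal _ Hm). intros h Hh Hlt. simpl in Hlt.
    pose proof (Rmin_l del t). pose proof (Rmin_r del t).
    pose proof (Rabs_def2 _ _ Hlt).
    rewrite !ext_eq by lra. apply H; auto; lra.
  - subst t. exists (mkposreal _ Hdel). intros h Hh Hlt. simpl in Hlt.
    destruct (Rle_dec 0 h).
    + rewrite !ext_eq by lra. apply H; auto; lra.
    + unfold ext. destruct (Rle_dec 0 (0+h)); [lra|]. destruct (Rle_dec 0 0); [|lra].
      replace ((f 0 + f' 0 * (0 + h) - f 0) / h - f' 0) with 0 by (field; auto).
      rewrite Rabs_R0; lra.
Qed.

Lemma dpl_nonneg f t l : dpl f t l -> deriv_nonneg f t l.
Proof.
  intros H eps Heps. destruct (H eps Heps) as [del Hd].
  exists del. split; [apply cond_pos|]. intros h Hh _ Hl. apply Hd; auto.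
Qed.

Lemma nonneg_ext f g t l : 0 <= t -> (forall s, 0 <= s -> f s = g s) ->
  deriv_nonneg g t l -> deriv_nonneg f t l.
Proof.
  intros Ht He H eps Heps. destruct (H eps Heps) as [del [Hd H2]].
  exists del. split; auto. intros h Hh Hp Hl. rewrite !He by lra. auto.
Qed.

Lemma nonneg_minus f g t a b : deriv_nonneg f t a -> deriv_nonneg g t b ->
  deriv_nonneg (fun s => f s - g s) t (a - b).
Proof.
  intros Hf Hg eps Heps.
  destruct (Hf (eps/2) ltac:(lra)) as [d1 [Hd1 H1]].
  destruct (Hg (eps/2) ltac:(lra)) as [d2 [Hd2 H2]].
  exists (Rmin d1 d2). split; [apply Rmin_pos; auto|].
  intros h Hh Hp Hl. pose proof (Rmin_l d1 d2). pose proof (Rmin_r d1 d2).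
  specialize (H1 h Hh Hp ltac:(lra)). specialize (H2 h Hh Hp ltac:(lra)).
  replace ((f (t + h) - g (t + h) - (f t - g t)) / h - (a - b)) with
    (((f (t + h) - f t) / h - a) - ((g (t + h) - g t) / h - b)) by (field; auto).
  eapply Rle_lt_trans; [apply Rabs_triang|]. rewrite Rabs_Ropp. lra.
Qed.

Lemma nonneg_val f t a b : a = b -> deriv_nonneg f t a -> deriv_nonneg f t b.
Proof. intros ->; auto. Qed.

Lemma mono F F' : (forall t, 0 <= t -> dpl F t (F' t)) ->
  (forall t, 0 <= t -> 0 <= F' t) -> forall t, 0 <= t -> F 0 <= F t.
Proof.
  intros Hd Hp t Ht. destruct (Rle_lt_or_eq_dec 0 t Ht) as [H|H]; [|subst; lra].
  destruct (MVT_cor2 F F' 0 t H) as [c [Hc Hc2]].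
  { intros c Hc. apply Hd; lra. }
  assert (0 <= F' c * (t - 0)) by (apply Rmult_le_pos; [apply Hp|]; lra). lra.
Qed.

Lemma lipD F F' B : (forall t, 0 <= t -> dpl F t (F' t)) ->
  (forall t, 0 <= t -> Rabs (F' t) <= B) ->
  forall t s, 0 <= t -> 0 <= s -> Rabs (F t - F s) <= B * Rabs (t - s).
Proof.
  intros Hd Hb.
  assert (K : forall t s, 0 <= s -> s < t -> Rabs (F t - F s) <= B * Rabs (t - s)).
  { intros t s Hs Hst. destruct (MVT_cor2 F F' s t Hst) as [c [Hc Hc2]].
    { intros c Hc. apply Hd; lra. }
    rewrite Hc, Rabs_mult. apply Rmult_le_compat_r; [apply Rabs_pos|]. apply Hb; lra. }
  intros t s Ht Hs. destruct (Rtotal_order s t) as [H|[H|H]].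
  - auto.
  - subst. rewrite !Rminus_eq_0, Rabs_R0. pose proof (Hb t Ht). pose proof (Rabs_pos (F' t)). nra.
  - rewrite (Rabs_minus_sym (F t)), (Rabs_minus_sym t). auto.
Qed.

Lemma lip F F' B : (forall t, 0 <= t -> deriv_nonneg F t (F' t)) ->
  (forall t, 0 <= t -> Rabs (F' t) <= B) ->
  forall t s, 0 <= t -> 0 <= s -> Rabs (F t - F s) <= B * Rabs (t - s).
Proof.
  intros Hd Hb t s Ht Hs.
  pose proof (lipD _ _ B (ext_D F F' Hd) Hb t s Ht Hs). rewrite !ext_eq in H by lra. auto.
Qed.

Lemma D_eq f x l l' : dpl f x l -> l = l' -> dpl f x l'.
Proof. intros H ->; auto. Qed.
Lemma Dconst c x : dpl (fun _ => c) x 0.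
Proof. apply derivable_pt_lim_const. Qed.
Lemma Did x : dpl (fun t => t) x 1.
Proof. apply derivable_pt_lim_id. Qed.
Lemma Dplus f g x a b : dpl f x a -> dpl g x b -> dpl (fun t => f t + g t) x (a + b).
Proof. intros; apply (derivable_pt_lim_plus f g); auto. Qed.
Lemma Dminus f g x a b : dpl f x a -> dpl g x b -> dpl (fun t => f t - g t) x (a - b).
Proof. intros; apply (derivable_pt_lim_minus f g); auto. Qed.
Lemma Dopp f x a : dpl f x a -> dpl (fun t => - f t) x (- a).
Proof. intros; apply (derivable_pt_lim_opp f); auto. Qed.
Lemma Dmult f g x a b : dpl f x a -> dpl g x b -> dpl (fun t => f t * g t) x (a * g x + f x * b).
Proof. intros; apply (derivable_pt_lim_mult f g); auto. Qed.
Lemma Dcomp f g x a b : dpl f x a -> dpl g (f x) b -> dpl (fun t => g (f t)) x (b * a).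
Proof. intros; apply (derivable_pt_lim_comp f g); auto. Qed.
Lemma Dsin f x a : dpl f x a -> dpl (fun t => sin (f t)) x (cos (f x) * a).
Proof. intros; apply (Dcomp f sin); auto. apply derivable_pt_lim_sin. Qed.
Lemma Dcos f x a : dpl f x a -> dpl (fun t => cos (f t)) x (- sin (f x) * a).
Proof. intros; apply (Dcomp f cos); auto. apply derivable_pt_lim_cos. Qed.
Lemma Dexp f x a : dpl f x a -> dpl (fun t => exp (f t)) x (exp (f x) * a).
Proof. intros; apply (Dcomp f exp); auto. apply derivable_pt_lim_exp. Qed.
Lemma Dsqrt f x a : 0 < f x -> dpl f x a -> dpl (fun t => sqrt (f t)) x (/ (2 * sqrt (f x)) * a).
Proof. intros; apply (Dcomp f sqrt); auto. apply derivable_pt_lim_sqrt; auto. Qed.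
Lemma Dinv f x a : f x <> 0 -> dpl f x a -> dpl (fun t => / f t) x (- a / (f x)^2).
Proof. intros.
  assert (H1 : dpl (fun t => 1 / f t) x ((0 * f x - a * 1) / (f x)²))
    by (apply (derivable_pt_lim_div (fun _ => 1) f); [apply Dconst | auto | auto]).
  eapply D_eq. apply (derivable_pt_lim_ext (fun t => 1 / f t)). intros; cbv beta; unfold Rdiv; ring.
  exact H1. unfold Rsqr; field; auto. Qed.
Lemma Ddiv f g x a b : g x <> 0 -> dpl f x a -> dpl g x b ->
  dpl (fun t => f t / g t) x ((a * g x - b * f x) / (g x)^2).
Proof. intros.
  assert (H2 : dpl (fun t => f t / g t) x ((a * g x - b * f x) / (g x)²))
    by (apply (derivable_pt_lim_div f g); auto).
  eapply D_eq. exact H2. unfold Rsqr; field; auto. Qed.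
Lemma Dpow f x a n : dpl f x a -> dpl (fun t => f t ^ n) x (INR n * f x ^ (pred n) * a).
Proof. intros. apply (Dcomp f (fun y => y ^ n)); auto. apply derivable_pt_lim_pow. Qed.

Lemma Dscal c x : dpl (Rmult c) x c.
Proof. eapply D_eq. apply (Dmult (fun _ => c) (fun t => t)). apply Dconst. apply Did. ring. Qed.
Lemma Dsin0 x : dpl sin x (cos x).
Proof. apply derivable_pt_lim_sin. Qed.
Lemma Dcos0 x : dpl cos x (- sin x).
Proof. apply derivable_pt_lim_cos. Qed.
Lemma Dexp0 x : dpl exp x (exp x).
Proof. apply derivable_pt_lim_exp. Qed.

Ltac Dtac :=
  match goal with
  | |- dpl (fun _ => ?c) _ _ => apply Dconst
  | |- dpl (fun t => t) _ _ => apply Did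
  | |- dpl (Rmult _) _ _ => apply Dscal
  | |- dpl sin _ _ => apply Dsin0
  | |- dpl cos _ _ => apply Dcos0
  | |- dpl exp _ _ => apply Dexp0
  | |- dpl (fun t => _ + _) _ _ => apply Dplus; Dtac
  | |- dpl (fun t => _ - _) _ _ => apply Dminus; Dtac
  | |- dpl (fun t => - _) _ _ => apply Dopp; Dtac
  | |- dpl (fun t => _ / _) _ _ => apply Ddiv; [ | Dtac | Dtac ]
  | |- dpl (fun t => _ * _) _ _ => apply Dmult; Dtac
  | |- dpl (fun t => / _) _ _ => apply Dinv; [ | Dtac ]
  | |- dpl (fun t => sin _) _ _ => apply Dsin; Dtac
  | |- dpl (fun t => cos _) _ _ => apply Dcos; Dtac
  | |- dpl (fun t => exp _) _ _ => apply Dexp; Dtac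
  | |- dpl (fun t => sqrt _) _ _ => apply Dsqrt; [ | Dtac ]
  | |- dpl (fun t => _ ^ _) _ _ => apply Dpow; Dtac
  | H : forall t, 0 <= t -> dpl ?F t _ |- dpl ?F _ _ => apply H
  | _ => idtac
  end.


From Coquelicot Require Import Coquelicot.
Open Scope R_scope.

Lemma lip_cont f x : (forall y, Rabs (f y - f x) <= Rabs (y - x)) -> continuity_pt f x.
Proof.
  intros H. unfold continuity_pt, continue_in, limit1_in, limit_in. simpl. unfold R_dist.
  intros eps Heps. exists eps. split; auto. intros y [_ Hy]. eapply Rle_lt_trans; [apply H|]; auto.
Qed.

Definition mpos (s : R) := (s + Rabs s) / 2.

Lemma mpos_nonneg s : 0 <= mpos s.
Proof. unfold mpos. pose proof (Rle_abs (-s)). rewrite Rabs_Ropp in H. lra. Qed.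
Lemma mpos_eq s : 0 <= s -> mpos s = s.
Proof. intros; unfold mpos; rewrite Rabs_pos_eq; lra. Qed.
Lemma mpos_cont s : continuity_pt mpos s.
Proof.
  apply lip_cont. intros y. unfold mpos.
  replace ((y + Rabs y) / 2 - (s + Rabs s) / 2) with (((y - s) + (Rabs y - Rabs s)) / 2) by field.
  pose proof (Rabs_triang_inv y s). pose proof (Rabs_triang_inv s y).
  rewrite (Rabs_minus_sym s y) in H0.
  unfold Rdiv. rewrite Rabs_mult, (Rabs_pos_eq (/2)) by lra.
  pose proof (Rabs_triang (y - s) (Rabs y - Rabs s)).
  assert (Rabs (Rabs y - Rabs s) <= Rabs (y - s)).
  { apply Rabs_le; lra. }
  lra.
Qed.

Lemma antider (G : R -> R) : (forall u, 0 <= u -> continuity_pt G u) ->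
  exists Phi : R -> R, Phi 0 = 0 /\ forall t, 0 <= t -> dpl Phi t (G t).
Proof.
  intros HG. set (g := fun s => G (mpos s)).
  assert (Hg : forall s, continuity_pt g s).
  { intros s. apply (continuity_pt_comp mpos G). apply mpos_cont. apply HG, mpos_nonneg. }
  assert (Hg' : forall s, continuous g s) by (intros; apply continuity_pt_filterlim; auto).
  exists (fun t => RInt g 0 t). split.
  - exact (RInt_point 0 g).
  - intros t Ht. apply is_derive_Reals.
    replace (G t) with (g t) by (unfold g; rewrite mpos_eq; auto).
    apply (is_derive_RInt g (fun b => RInt g 0 b) 0 t); auto. apply filter_forall. intros b.
    exact (RInt_correct g 0 b (ex_RInt_continuous g 0 b (fun z _ => Hg' z))).
Qed.

Definition gam (c0 c1 c2 A : R -> R) (e l dd t : R) : R :=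
  let a := l * A t in
  c0 t - e * sin (2 * a)
  - e ^ 2 / 4 * (sin a ^ 4 / c0 t)
  - 5 / (16 * l ^ 2) * (c1 t / c0 t) ^ 2
  + e / (2 * l) * (c1 t / (c0 t * sqrt (c0 t))) * sin a ^ 2
  + 1 / (4 * l ^ 2) * (c2 t / c0 t)
  + dd.

Section Core.
Variables (mu1 mu2 K : R) (c0 c1 c2 A : R -> R).
Hypothesis Hmu1 : 0 < mu1.
Hypothesis Hmu12 : mu1 <= mu2.
Hypothesis Hc1 : forall t, 0 <= t -> deriv_nonneg c0 t (c1 t).
Hypothesis Hc2 : forall t, 0 <= t -> deriv_nonneg c1 t (c2 t).
Hypothesis HA : forall t, 0 <= t -> deriv_nonneg A t (sqrt (c0 t)).
Hypothesis HA0 : A 0 = 0.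
Hypothesis Hbnd : forall t, 0 <= t -> mu1 <= c0 t <= mu2.

Definition C0 := ext c0 (c1 0).
Definition C1 := ext c1 (c2 0).
Definition AA := ext A (sqrt (c0 0)).
Lemma dC0 : forall t, 0 <= t -> dpl C0 t (c1 t).
Proof. exact (ext_D c0 c1 Hc1). Qed.
Lemma dC1 : forall t, 0 <= t -> dpl C1 t (c2 t).
Proof. exact (ext_D c1 c2 Hc2). Qed.
Lemma dAA : forall t, 0 <= t -> dpl AA t (sqrt (c0 t)).
Proof. exact (ext_D A (fun t => sqrt (c0 t)) HA). Qed.
Lemma C0_eq t : 0 <= t -> C0 t = c0 t.
Proof. apply ext_eq. Qed.
Lemma C1_eq t : 0 <= t -> C1 t = c1 t.
Proof. apply ext_eq. Qed.
Lemma AA_eq t : 0 <= t -> AA t = A t.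
Proof. apply ext_eq. Qed.
Lemma C0pos t : 0 <= t -> 0 < C0 t.
Proof. intros; rewrite C0_eq; auto. pose proof (Hbnd t H); lra. Qed.

Definition P t := sqrt (sqrt (C0 t)).
Lemma sqC0pos t : 0 <= t -> 0 < sqrt (C0 t).
Proof. intros; apply sqrt_lt_R0, C0pos; auto. Qed.
Lemma Ppos t : 0 <= t -> 0 < P t.
Proof. intros; apply sqrt_lt_R0, sqC0pos; auto. Qed.
Lemma P2C t : 0 <= t -> sqrt (C0 t) = P t ^ 2.
Proof. intros. unfold P. simpl. rewrite Rmult_1_r, sqrt_sqrt; auto. left; apply sqC0pos; auto. Qed.
Lemma P2 t : 0 <= t -> sqrt (c0 t) = P t ^ 2.
Proof. intros. rewrite <- C0_eq by auto. apply P2C; auto. Qed.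
Lemma P4 t : 0 <= t -> c0 t = P t ^ 4.
Proof. intros. rewrite <- C0_eq by auto. replace (P t ^ 4) with ((P t ^ 2) ^ 2) by ring.
  rewrite <- P2C by auto. simpl. rewrite Rmult_1_r, sqrt_sqrt; auto. left; apply C0pos; auto. Qed.

Lemma dP : forall t, 0 <= t -> dpl P t (c1 t / (4 * P t ^ 3)).
Proof.
  intros t Ht. unfold P. eapply D_eq. Dtac. all: cbv beta.
  all: try (apply C0pos; auto); try (apply sqC0pos; auto); try (apply dC0; auto).
  cbv beta. change (sqrt (sqrt (C0 t))) with (P t). rewrite P2C by auto.
  pose proof (Ppos t Ht). field. lra.
Qed.

Section Sol.
Variables (lam eps d : R).
Hypothesis Hlam : 0 < lam.

Definition a t := lam * AA t.
Lemma da : forall t, 0 <= t -> dpl a t (lam * P t ^ 2).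
Proof.
  intros t Ht. unfold a. eapply D_eq. Dtac. all: cbv beta. apply dAA; auto.
  rewrite P2 by auto. ring.
Qed.

Lemma Gcont : forall u, 0 <= u -> continuity_pt (fun t => sin (a t) ^ 2 / P t ^ 2) u.
Proof.
  intros u Hu. apply derivable_continuous_pt.
  eexists. unfold derivable_pt_abs. Dtac. all: try (apply da; auto); try (apply dP; auto).
  pose proof (Ppos u Hu). apply pow_nonzero. lra.
Qed.

Section Sol2.
Variable Phi : R -> R.
Hypothesis HPhi0 : Phi 0 = 0.
Hypothesis HPhi : forall t, 0 <= t -> dpl Phi t (sin (a t) ^ 2 / P t ^ 2).

Definition u t := eps * lam / 2 * Phi t - d * t.
Lemma du : forall t, 0 <= t -> dpl u t (eps * lam * sin (a t) ^ 2 / (2 * P t ^ 2) - d).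
Proof.
  intros t Ht. unfold u. eapply D_eq. Dtac. all: cbv beta. all: try assumption.
  pose proof (Ppos t Ht). field. lra.
Qed.

Definition Nn := lam * P 0.
Definition y t := exp (u t) * sin (a t) / (Nn * P t).
Definition Y1 t := exp (u t) / (Nn * P t) *
  (lam * P t ^ 2 * cos (a t) +
   sin (a t) * (eps * lam * sin (a t) ^ 2 / (2 * P t ^ 2) - d - C1 t / (4 * P t ^ 4))).

Lemma Nnpos : 0 < Nn.
Proof. unfold Nn. pose proof (Ppos 0 (Rle_refl 0)). nra. Qed.

Lemma dy : forall t, 0 <= t -> dpl y t (Y1 t).
Proof.
  intros t Ht. unfold y. eapply D_eq. Dtac. all: cbv beta.
  all: try (apply da; auto); try (apply dP; auto); try (apply du; auto).
  - pose proof (Ppos t Ht). pose proof Nnpos. apply Rgt_not_eq. nra.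
  - unfold Y1. rewrite C1_eq by auto. pose proof (Ppos t Ht). pose proof Nnpos.
    field. lra.
Qed.

Lemma dY1 : forall t, 0 <= t ->
  dpl Y1 t (- (2 * d * Y1 t + lam ^ 2 * gam c0 c1 c2 A eps lam (d ^ 2 / lam ^ 2) t * y t)).
Proof.
  intros t Ht. unfold Y1. eapply D_eq. Dtac. all: cbv beta.
  all: try (apply da; auto); try (apply dP; auto); try (apply du; auto); try (apply dC1; auto).
  all: pose proof (Ppos t Ht); pose proof Nnpos.
  all: try (apply Rgt_not_eq; nra).
  all: try (apply pow_nonzero; lra).
  all: try (apply Rmult_integral_contrapositive_currified; [lra|apply pow_nonzero; lra]).
  unfold gam, y. cbv zeta. rewrite <- AA_eq by auto. fold (a t).
  rewrite C1_eq by auto. rewrite P2 by auto. rewrite P4 by auto. rewrite sin_2a.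
  replace (INR 2) with 2 by (simpl; lra). replace (INR 4) with 4 by (simpl; lra). simpl pred.
  field. lra.
Qed.

Lemma a0 : a 0 = 0.
Proof. unfold a. rewrite AA_eq, HA0 by lra. ring. Qed.
Lemma y0 : y 0 = 0.
Proof. unfold y. rewrite a0, sin_0. unfold Rdiv. ring. Qed.
Lemma Y10 : Y1 0 = 1.
Proof.
  unfold Y1. rewrite a0, sin_0, cos_0. unfold u. rewrite HPhi0.
  replace (eps * lam / 2 * 0 - d * 0) with 0 by ring. rewrite exp_0.
  unfold Nn. pose proof (Ppos 0 (Rle_refl 0)). field. lra.
Qed.

Hypothesis Heps : 0 < eps.
Hypothesis Hd : 0 <= d.
Hypothesis HK1 : forall t, 0 <= t -> Rabs (c1 t) <= K.
Hypothesis HlamK : K * sqrt mu2 <= lam * mu1 ^ 2.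

Lemma sqrt_bnds t : 0 <= t -> sqrt mu1 <= P t ^ 2 <= sqrt mu2.
Proof.
  intros Ht. rewrite <- P2 by auto. pose proof (Hbnd t Ht).
  split; apply sqrt_le_1_alt; lra.
Qed.

Lemma Phi_lb : forall t, 0 <= t ->
  1 / (4 * sqrt mu2) * eps * lam * t - eps / (4 * mu1) <= eps * lam * Phi t.
Proof.
  set (H := fun t => eps * lam * Phi t + eps * sin (2 * a t) / (4 * C0 t)
                     - 1 / (4 * sqrt mu2) * eps * lam * t).
  assert (Hm : forall t, 0 <= t -> H 0 <= H t).
  { apply (mono H (fun t => eps * lam * (sin (a t) ^ 2 / P t ^ 2)
        + eps * ((cos (2 * a t) * (2 * (lam * P t ^ 2)) * (4 * C0 t) - 4 * c1 t * sin (2 * a t)) / (4 * C0 t) ^ 2)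
        - 1 / (4 * sqrt mu2) * eps * lam)).
    - intros t Ht. unfold H. eapply D_eq. Dtac. all: cbv beta.
      all: try (apply da; auto); try (apply dC0; auto); try assumption.
      + pose proof (C0pos t Ht). intro; lra.
      + pose proof (C0pos t Ht). pose proof (Ppos t Ht). pose proof (sqrt_lt_R0 mu2 ltac:(lra)). field. repeat split; apply Rgt_not_eq; lra.
    - intros t Ht. rewrite C0_eq, P4 by auto. rewrite cos_2a_sin.
      pose proof (Ppos t Ht) as Hp. pose proof (sqrt_bnds t Ht) as [Hq1 Hq2].
      pose proof (sqrt_lt_R0 mu1 Hmu1) as Hs1.
      set (q := P t ^ 2) in *. replace (P t ^ 4) with (q ^ 2) by (unfold q; ring).
      assert (Hq : 0 < q) by lra.
      set (S := sin (a t)). set (s2 := sin (2 * a t)).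
      replace (eps * lam * (S ^ 2 / q) + eps * (((1 - 2 * S * S) * (2 * (lam * q)) * (4 * q ^ 2) - 4 * c1 t * s2) / (4 * q ^ 2) ^ 2) - 1 / (4 * sqrt mu2) * eps * lam)
        with (eps * (lam / (2 * q) - c1 t * s2 / (4 * q ^ 4) - lam / (4 * sqrt mu2))) by (field; lra).
      apply Rmult_le_pos; [lra|].
      assert (T1 : lam / (2 * sqrt mu2) <= lam / (2 * q)).
      { apply Rmult_le_compat_l; [lra|]. apply Rinv_le_contravar; lra. }
      assert (Hq4 : mu1 ^ 2 <= q ^ 4).
      { replace (q ^ 4) with ((P t ^ 4) ^ 2) by (unfold q; ring). rewrite <- P4 by auto.
        pose proof (Hbnd t Ht). apply pow_incr. lra. }
      assert (T2 : c1 t * s2 / (4 * q ^ 4) <= K / (4 * mu1 ^ 2)).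
      { assert (Habs : Rabs (c1 t * s2) <= K).
        { rewrite Rabs_mult. pose proof (HK1 t Ht). pose proof (Rabs_pos (c1 t)).
          assert (Rabs s2 <= 1) by (apply Rabs_le; unfold s2; split; [apply SIN_bound|apply SIN_bound]).
          pose proof (Rabs_pos s2). nra. }
        pose proof (Rle_abs (c1 t * s2)).
        assert (0 <= K) by (pose proof (Rabs_pos (c1 t * s2)); lra).
        assert (0 < mu1 ^ 2) by (apply pow_lt; lra).
        apply (Rle_trans _ (K / (4 * q ^ 4))).
        - apply Rmult_le_compat_r; [|lra]. left; apply Rinv_0_lt_compat. lra.
        - apply Rmult_le_compat_l; [lra|]. apply Rinv_le_contravar; lra. }
      assert (T3 : K / (4 * mu1 ^ 2) <= lam / (4 * sqrt mu2)).
      { assert (0 < mu1 ^ 2) by (apply pow_lt; lra). pose proof (sqrt_lt_R0 mu2 ltac:(lra)).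
        apply (Rmult_le_reg_r (4 * mu1 ^ 2 * sqrt mu2)). nra.
        replace (K / (4 * mu1 ^ 2) * (4 * mu1 ^ 2 * sqrt mu2)) with (K * sqrt mu2) by (field; lra).
        replace (lam / (4 * sqrt mu2) * (4 * mu1 ^ 2 * sqrt mu2)) with (lam * mu1 ^ 2) by (field; lra).
        lra. }
      assert (lam / (2 * sqrt mu2) = 2 * (lam / (4 * sqrt mu2))) by (field; pose proof (sqrt_lt_R0 mu2 ltac:(lra)); lra).
      assert (0 <= lam / (4 * sqrt mu2)).
      { pose proof (sqrt_lt_R0 mu2 ltac:(lra)). apply Rmult_le_pos; [lra|]. left; apply Rinv_0_lt_compat; lra. }
      lra. }
  intros t Ht. specialize (Hm t Ht). unfold H in Hm.
  rewrite a0, HPhi0 in Hm. replace (2 * 0) with 0 in Hm by ring. rewrite sin_0 in Hm.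
  rewrite (C0_eq t Ht), (C0_eq 0 (Rle_refl 0)) in Hm.
  assert (B : eps * sin (2 * a t) / (4 * c0 t) <= eps / (4 * mu1)).
  { pose proof (Hbnd t Ht). pose proof (SIN_bound (2 * a t)).
    unfold Rdiv. apply (Rle_trans _ (eps * / (4 * c0 t))).
    - apply Rmult_le_compat_r. left; apply Rinv_0_lt_compat; lra. nra.
    - apply Rmult_le_compat_l; [lra|]. apply Rinv_le_contravar; lra. }
  pose proof (Hbnd 0 (Rle_refl 0)).
  replace (eps * lam * 0 + eps * 0 / (4 * c0 0) - 1 / (4 * sqrt mu2) * eps * lam * 0) with 0 in Hm by (unfold Rdiv; ring).
  lra.
Qed.

Hypothesis Hr1 : eps / (2 * sqrt mu1) <= 1 / 5.
Hypothesis Hr2 : K / (4 * mu1) <= lam / 5.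
Hypothesis Hr3 : d <= lam / 5.
Hypothesis Hexp : mu1 / mu2 <= exp (- (eps / (4 * mu1))).

Lemma energy : forall t, 0 <= t ->
  Y1 t ^ 2 + lam ^ 2 * y t ^ 2 >=
  mu1 * Rmin 1 mu1 / (2 * mu2 ^ 2) * exp (1 / (4 * sqrt mu2) * eps * lam * t - 2 * d * t).
Proof.
  intros t Ht.
  pose proof (Ppos t Ht) as Hp. pose proof Nnpos as HN.
  pose proof (sqrt_bnds t Ht) as [Hq1 Hq2]. pose proof (sqrt_bnds 0 (Rle_refl 0)) as [Hq01 Hq02].
  pose proof (sqrt_lt_R0 mu1 Hmu1) as Hs1. pose proof (Hbnd t Ht) as Hb.
  pose proof (P4 t Ht) as HP4.
  set (E := exp (u t)). set (S := sin (a t)). set (Cc := cos (a t)). set (p := P t) in *.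
  set (r := eps * lam * S ^ 2 / (2 * p ^ 2) - d - c1 t / (4 * p ^ 4)).
  set (Q := (lam * p ^ 2 * Cc + S * r) ^ 2 + lam ^ 2 * S ^ 2).
  assert (HE : Y1 t ^ 2 + lam ^ 2 * y t ^ 2 = (E / (Nn * p)) ^ 2 * Q).
  { unfold Y1, y, Q, r. fold E S Cc p. rewrite C1_eq by auto. field. lra. }
  rewrite HE.
  assert (HS2 : S ^ 2 <= 1) by (unfold S; pose proof (sin2 (a t)); pose proof (Rle_0_sqr (cos (a t))); unfold Rsqr in *; simpl; lra).
  assert (HS0 : 0 <= S ^ 2) by apply pow2_ge_0.
  assert (Hr : Rabs r <= 3 * lam / 5).
  { unfold r. eapply Rle_trans; [apply Rabs_triang|].
    eapply Rle_trans; [apply Rplus_le_compat_r; apply Rabs_triang|].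
    rewrite Rabs_Ropp, Rabs_Ropp.
    assert (R1 : Rabs (eps * lam * S ^ 2 / (2 * p ^ 2)) <= lam / 5).
    { rewrite Rabs_pos_eq.
      2:{ apply Rmult_le_pos; [|left; apply Rinv_0_lt_compat; lra]. apply Rmult_le_pos; nra. }
      apply (Rle_trans _ (eps * lam / (2 * sqrt mu1))).
      - unfold Rdiv. apply (Rle_trans _ (eps * lam * / (2 * p ^ 2))).
        + rewrite <- (Rmult_1_r (eps * lam)) at 2. apply Rmult_le_compat_r.
          left; apply Rinv_0_lt_compat; lra. apply Rmult_le_compat_l; nra.
        + apply Rmult_le_compat_l; [nra|]. apply Rinv_le_contravar; lra.
      - replace (eps * lam / (2 * sqrt mu1)) with (lam * (eps / (2 * sqrt mu1))) by (field; lra).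
        replace (lam / 5) with (lam * (1/5)) by field. apply Rmult_le_compat_l; lra. }
    assert (R2 : Rabs (c1 t / (4 * p ^ 4)) <= lam / 5).
    { unfold Rdiv. rewrite Rabs_mult, (Rabs_pos_eq (/ (4 * p ^ 4))) by (left; apply Rinv_0_lt_compat; lra).
      pose proof (HK1 t Ht). pose proof (Rabs_pos (c1 t)).
      apply (Rle_trans _ (K / (4 * mu1))); [|lra].
      unfold Rdiv. apply (Rle_trans _ (K * / (4 * p ^ 4))).
      - apply Rmult_le_compat_r; [left; apply Rinv_0_lt_compat; lra|lra].
      - apply Rmult_le_compat_l; [lra|]. apply Rinv_le_contravar; lra. }
    rewrite (Rabs_pos_eq d) by lra. lra. }
  assert (Hr2' : r ^ 2 <= 9 * lam ^ 2 / 25).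
  { replace (r ^ 2) with (Rabs r ^ 2) by (rewrite RPow_abs, Rabs_pos_eq by apply pow2_ge_0; reflexivity).
    pose proof (Rabs_pos r). replace (9 * lam ^ 2 / 25) with ((3 * lam / 5) ^ 2) by field.
    apply pow_incr; lra. }
  set (m := Rmin 1 mu1).
  assert (Hm1 : m <= 1) by apply Rmin_l.
  assert (Hm2 : m <= p ^ 4) by (pose proof (Rmin_r 1 mu1); fold m in H; lra).
  assert (Hm0 : 0 < m) by (apply Rmin_pos; lra).
  assert (HQ : lam ^ 2 / 2 * m <= Q).
  { assert (HSC : S ^ 2 + Cc ^ 2 = 1) by (unfold S, Cc; pose proof (sin2_cos2 (a t)); unfold Rsqr in *; simpl; lra).
    set (x := lam * p ^ 2 * Cc). set (z := S * r).
    assert (Q1 : Q >= x ^ 2 / 2 - z ^ 2 + lam ^ 2 * S ^ 2).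
    { unfold Q. fold x z. pose proof (pow2_ge_0 (x + 2 * z)). nra. }
    assert (Q2 : z ^ 2 <= S ^ 2 * (9 * lam ^ 2 / 25)).
    { unfold z. rewrite Rpow_mult_distr. apply Rmult_le_compat_l; auto. }
    assert (Q3 : x ^ 2 = lam ^ 2 * p ^ 4 * Cc ^ 2) by (unfold x; ring).
    assert (HC0 : 0 <= Cc ^ 2) by apply pow2_ge_0.
    assert (lam ^ 2 * m * Cc ^ 2 <= lam ^ 2 * p ^ 4 * Cc ^ 2).
    { apply Rmult_le_compat_r; auto. apply Rmult_le_compat_l; [apply pow2_ge_0|lra]. }
    assert (lam ^ 2 * m * S ^ 2 <= lam ^ 2 * S ^ 2).
    { rewrite Rmult_assoc, (Rmult_comm m), <- Rmult_assoc. rewrite <- (Rmult_1_r (lam ^ 2 * S ^ 2)) at 2.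
      apply Rmult_le_compat_l; [|lra]. pose proof (pow2_ge_0 lam). nra. }
    nra. }
  assert (HNp : (Nn * p) ^ 2 <= lam ^ 2 * mu2).
  { unfold Nn. replace ((lam * P 0 * p) ^ 2) with (lam ^ 2 * (P 0 ^ 2 * p ^ 2)) by ring.
    apply Rmult_le_compat_l; [apply pow2_ge_0|].
    replace mu2 with (sqrt mu2 * sqrt mu2) by (apply sqrt_sqrt; lra).
    apply Rmult_le_compat; lra. }
  assert (HE2 : exp (1 / (4 * sqrt mu2) * eps * lam * t - 2 * d * t) * (mu1 / mu2) <= E ^ 2).
  { unfold E. replace (exp (u t) ^ 2) with (exp (2 * u t)) by (simpl; rewrite Rmult_1_r, <- exp_plus; f_equal; ring).
    apply (Rle_trans _ (exp (1 / (4 * sqrt mu2) * eps * lam * t - 2 * d * t) * exp (- (eps / (4 * mu1))))).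
    - apply Rmult_le_compat_l; [left; apply exp_pos|auto].
    - rewrite <- exp_plus.
      pose proof (Phi_lb t Ht). unfold u.
      destruct (Rle_lt_or_eq_dec (1 / (4 * sqrt mu2) * eps * lam * t - 2 * d * t + - (eps / (4 * mu1))) (2 * (eps * lam / 2 * Phi t - d * t))) as [Hlt|Heq].
      + lra.
      + left; apply exp_increasing; auto.
      + rewrite Heq; lra. }
  assert (Hmu2 : 0 < mu2) by lra.
  assert (HNp0 : 0 < (Nn * p) ^ 2) by (apply pow_lt; nra).
  replace ((E / (Nn * p)) ^ 2 * Q) with (E ^ 2 * Q / (Nn * p) ^ 2) by (field; lra).
  apply Rle_ge.
  apply (Rle_trans _ (exp (1 / (4 * sqrt mu2) * eps * lam * t - 2 * d * t) * (mu1 / mu2) * (lam ^ 2 / 2 * m) / (lam ^ 2 * mu2))).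
  - right. fold m. field. lra.
  - assert (0 < exp (1 / (4 * sqrt mu2) * eps * lam * t - 2 * d * t) * (mu1 / mu2)).
    { apply Rmult_lt_0_compat; [apply exp_pos|]. apply Rdiv_lt_0_compat; lra. }
    assert (0 < lam ^ 2 / 2 * m) by (apply Rmult_lt_0_compat; [|lra]; apply Rdiv_lt_0_compat; [apply pow_lt|]; lra).
    unfold Rdiv at 1. unfold Rdiv at 2.
    apply Rmult_le_compat.
    + apply Rmult_le_pos; lra.
    + left; apply Rinv_0_lt_compat, Rmult_lt_0_compat; [apply pow_lt|]; lra.
    + apply Rmult_le_compat; lra.
    + apply Rinv_le_contravar; lra.
Qed.

End Sol2.
End Sol.
End Core.

Lemma key_ineq g v w M : Rabs g <= M -> 2 * g * v * w <= M * (v ^ 2 + w ^ 2).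
Proof.
  intros H. assert (2 * g * v * w <= Rabs g * (v ^ 2 + w ^ 2)).
  { destruct (Rle_dec 0 g).
    - rewrite Rabs_pos_eq by lra. pose proof (pow2_ge_0 (v - w)). nra.
    - rewrite Rabs_left by lra. pose proof (pow2_ge_0 (v + w)). nra. }
  pose proof (pow2_ge_0 v); pose proof (pow2_ge_0 w). nra.
Qed.

Lemma uniq (z z1 G : R -> R) (d lam B : R) : 0 <= d -> 0 < lam ->
  (forall t, 0 <= t -> Rabs (G t) <= B) ->
  (forall t, 0 <= t -> deriv_nonneg z t (z1 t)) ->
  (forall t, 0 <= t -> deriv_nonneg z1 t (- (2 * d * z1 t + lam ^ 2 * G t * z t))) ->
  z 0 = 0 -> z1 0 = 0 -> forall t, 0 <= t -> z t = 0 /\ z1 t = 0.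
Proof.
  intros Hd Hl HG Hz Hz1 H0 H10.
  set (z2 := fun t => - (2 * d * z1 t + lam ^ 2 * G t * z t)).
  set (Z := ext z (z1 0)). set (Z1 := ext z1 (z2 0)).
  assert (dZ : forall t, 0 <= t -> dpl Z t (z1 t)) by exact (ext_D z z1 Hz).
  assert (dZ1 : forall t, 0 <= t -> dpl Z1 t (z2 t)) by exact (ext_D z1 z2 Hz1).
  set (Kc := lam * (1 + B)).
  set (F := fun t => - ((Z1 t ^ 2 + lam ^ 2 * Z t ^ 2) * exp (- (Kc * t)))).
  set (F' := fun t => - ((2 * Z1 t * z2 t + lam ^ 2 * (2 * Z t * z1 t)) * exp (- (Kc * t))
             - (Z1 t ^ 2 + lam ^ 2 * Z t ^ 2) * (Kc * exp (- (Kc * t))))).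
  assert (HF : forall t, 0 <= t -> F 0 <= F t).
  { apply (mono F F').
    - intros t Ht. unfold F, F'. eapply D_eq. Dtac. all: cbv beta; try assumption.
      replace (INR 2) with 2 by (simpl; lra). simpl pred. ring.
    - intros t Ht. unfold F'. unfold Z, Z1. rewrite !ext_eq by auto.
      pose proof (exp_pos (- (Kc * t))) as He.
      assert (B0 : 0 <= B) by (pose proof (HG t Ht); pose proof (Rabs_pos (G t)); lra).
      assert (Hg : Rabs (1 - G t) <= 1 + B).
      { eapply Rle_trans; [apply Rabs_triang|]. rewrite Rabs_Ropp, Rabs_R1. pose proof (HG t Ht); lra. }
      pose proof (key_ineq (1 - G t) (lam * z t) (z1 t) (1 + B) Hg).
      assert (Hm : 2 * z1 t * z2 t + lam ^ 2 * (2 * z t * z1 t) -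
                   (z1 t ^ 2 + lam ^ 2 * z t ^ 2) * Kc <= 0).
      { unfold z2, Kc. assert (0 <= d * z1 t ^ 2) by (apply Rmult_le_pos; [lra| apply pow2_ge_0]).
        nra. }
      nra. }
  intros t Ht. specialize (HF t Ht). unfold F in HF. unfold Z, Z1 in HF.
  rewrite !ext_eq in HF by lra. rewrite H0, H10 in HF. replace (- (Kc * 0)) with 0 in HF by ring. rewrite exp_0 in HF.
  pose proof (exp_pos (- (Kc * t))) as He.
  assert (Hs : z1 t ^ 2 + lam ^ 2 * z t ^ 2 <= 0) by nra.
  assert (z1 t ^ 2 = 0) by (pose proof (pow2_ge_0 (z1 t)); pose proof (pow2_ge_0 (lam * z t)); nra).
  assert ((lam * z t) ^ 2 = 0) by (pose proof (pow2_ge_0 (z1 t)); pose proof (pow2_ge_0 (lam * z t)); nra).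
  split.
  - assert (lam * z t = 0) by nra. apply Rmult_integral in H2. lra.
  - nra.
Qed.

Lemma Rdiv_le_0_compat a b : 0 <= a -> 0 < b -> 0 <= a / b.
Proof. intros. apply Rmult_le_pos; auto. left; apply Rinv_0_lt_compat; auto. Qed.

Lemma abs_div_le x y X Y : Rabs x <= X -> 0 < Y -> Y <= y -> Rabs (x / y) <= X / Y.
Proof.
  intros H1 H2 H3. unfold Rdiv. rewrite Rabs_mult, Rabs_inv, (Rabs_pos_eq y) by lra.
  pose proof (Rabs_pos x).
  apply Rmult_le_compat; auto; [left; apply Rinv_0_lt_compat; lra|]. apply Rinv_le_contravar; lra.
Qed.

Lemma abs_mul_le x y X Y : Rabs x <= X -> Rabs y <= Y -> Rabs (x * y) <= X * Y.
Proof.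
  intros. rewrite Rabs_mult. pose proof (Rabs_pos x). pose proof (Rabs_pos y).
  apply Rmult_le_compat; auto.
Qed.

Lemma abs_sin_le x : Rabs (sin x) <= 1.
Proof. apply Rabs_le. pose proof (SIN_bound x). lra. Qed.

Lemma abs_pow_le x X n : Rabs x <= X -> Rabs (x ^ n) <= X ^ n.
Proof. intros. rewrite <- RPow_abs. apply pow_incr. split; auto. apply Rabs_pos. Qed.

Definition Dn mu1 K e l :=
  e + e ^ 2 / (4 * mu1) + 5 * K ^ 2 / (16 * l ^ 2 * mu1 ^ 2)
  + e * K / (2 * l * (mu1 * sqrt mu1)) + K / (4 * l ^ 2 * mu1).

Lemma gam_bound mu1 mu2 K (c0 c1 c2 A : R -> R) e l dd t :
  0 < mu1 -> mu1 <= c0 t <= mu2 -> Rabs (c1 t) <= K -> Rabs (c2 t) <= K ->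
  0 <= e -> 0 < l ->
  Rabs (gam c0 c1 c2 A e l dd t - c0 t - dd) <= Dn mu1 K e l.
Proof.
  intros Hm Hb H1 H2 He Hl. unfold gam, Dn. cbv zeta.
  set (S := sin (l * A t)).
  assert (HS : Rabs S <= 1) by apply abs_sin_le.
  assert (Hsq : sqrt mu1 <= sqrt (c0 t)) by (apply sqrt_le_1_alt; lra).
  assert (Hs1 : 0 < sqrt mu1) by (apply sqrt_lt_R0; lra).
  assert (Hl2 : 0 < l ^ 2) by (apply pow_lt; lra).
  assert (T1 : Rabs (e * sin (2 * (l * A t))) <= e * 1).
  { apply abs_mul_le. rewrite Rabs_pos_eq; lra. apply abs_sin_le. }
  assert (T2 : Rabs (e ^ 2 / 4 * (S ^ 4 / c0 t)) <= e ^ 2 / 4 * (1 ^ 4 / mu1)).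
  { apply abs_mul_le. rewrite Rabs_pos_eq; [lra|]. apply Rmult_le_pos; [apply pow2_ge_0|lra].
    apply abs_div_le; lra || (apply abs_pow_le; auto). }
  assert (T3 : Rabs (5 / (16 * l ^ 2) * (c1 t / c0 t) ^ 2) <= 5 / (16 * l ^ 2) * (K / mu1) ^ 2).
  { apply abs_mul_le. rewrite Rabs_pos_eq; [lra|]. apply Rdiv_le_0_compat; lra.
    apply abs_pow_le. apply abs_div_le; lra. }
  assert (T4 : Rabs (e / (2 * l) * (c1 t / (c0 t * sqrt (c0 t))) * S ^ 2) <= e / (2 * l) * (K / (mu1 * sqrt mu1)) * 1 ^ 2).
  { apply abs_mul_le; [|apply abs_pow_le; auto]. apply abs_mul_le.
    rewrite Rabs_pos_eq; [lra|]. apply Rdiv_le_0_compat; lra.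
    apply abs_div_le; [auto | apply Rmult_lt_0_compat; lra | apply Rmult_le_compat; lra]. }
  assert (T5 : Rabs (1 / (4 * l ^ 2) * (c2 t / c0 t)) <= 1 / (4 * l ^ 2) * (K / mu1)).
  { apply abs_mul_le. rewrite Rabs_pos_eq; [lra|]. apply Rdiv_le_0_compat; lra.
    apply abs_div_le; lra. }
  set (X1 := e * sin (2 * (l * A t))) in *.
  set (X2 := e ^ 2 / 4 * (S ^ 4 / c0 t)) in *.
  set (X3 := 5 / (16 * l ^ 2) * (c1 t / c0 t) ^ 2) in *.
  set (X4 := e / (2 * l) * (c1 t / (c0 t * sqrt (c0 t))) * S ^ 2) in *.
  set (X5 := 1 / (4 * l ^ 2) * (c2 t / c0 t)) in *.
  replace (c0 t - X1 - X2 - X3 + X4 + X5 + dd - c0 t - dd) with (- X1 - X2 - X3 + X4 + X5) by ring.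
  assert (Rabs (- X1 - X2 - X3 + X4 + X5) <= Rabs X1 + Rabs X2 + Rabs X3 + Rabs X4 + Rabs X5).
  { unfold Rminus.
    pose proof (Rabs_triang (-X1 + -X2 + -X3 + X4) X5).
    pose proof (Rabs_triang (-X1 + -X2 + -X3) X4).
    pose proof (Rabs_triang (-X1 + -X2) (-X3)).
    pose proof (Rabs_triang (-X1) (-X2)).
    rewrite !Rabs_Ropp in *. lra. }
  replace (e * 1) with e in T1 by ring.
  replace (e ^ 2 / 4 * (1 ^ 4 / mu1)) with (e ^ 2 / (4 * mu1)) in T2 by (field; lra).
  replace (5 / (16 * l ^ 2) * (K / mu1) ^ 2) with (5 * K ^ 2 / (16 * l ^ 2 * mu1 ^ 2)) in T3 by (field; lra).
  replace (e / (2 * l) * (K / (mu1 * sqrt mu1)) * 1 ^ 2) with (e * K / (2 * l * (mu1 * sqrt mu1))) in T4 by (field; lra).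
  replace (1 / (4 * l ^ 2) * (K / mu1)) with (K / (4 * l ^ 2 * mu1)) in T5 by (field; lra).
  lra.
Qed.

Lemma ev_and (P Q : nat -> Prop) : (exists N, forall n, (N <= n)%nat -> P n) ->
  (exists N, forall n, (N <= n)%nat -> Q n) -> exists N, forall n, (N <= n)%nat -> P n /\ Q n.
Proof.
  intros [N1 H1] [N2 H2]. exists (max N1 N2). intros n Hn. split.
  apply H1; lia. apply H2; lia.
Qed.

Lemma ev_lam (lam : nat -> R) M : cv_infty lam -> exists N, forall n, (N <= n)%nat -> M < lam n.
Proof. intros H. apply H. Qed.

Lemma ev_eps (eps : nat -> R) e0 : Un_cv eps 0 -> 0 < e0 ->
  exists N, forall n, (N <= n)%nat -> Rabs (eps n) < e0.
Proof.
  intros H He. destruct (H e0 He) as [N HN]. exists N. intros n Hn.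
  specialize (HN n Hn). unfold Rdist in HN. rewrite Rminus_0_r in HN. auto.
Qed.

Lemma Rpower_pos x y : 0 < Rpower x y.
Proof. unfold Rpower. apply exp_pos. Qed.

Lemma Rpower_2 l : 0 < l -> Rpower l 2 = l ^ 2.
Proof. intros. replace 2 with (INR 2) by (simpl; lra). apply Rpower_pow; auto. Qed.

Lemma rp_d l delta sigma : 0 < l ->
  (delta * Rpower l (2 * sigma)) ^ 2 / l ^ 2 = delta ^ 2 / Rpower l (2 - 4 * sigma).
Proof.
  intros Hl. rewrite <- (Rpower_2 l Hl).
  assert (E1 : Rpower l 2 = Rpower l (2 - 4 * sigma) * (Rpower l (2 * sigma) * Rpower l (2 * sigma))).
  { rewrite <- !Rpower_plus. f_equal. ring. }
  rewrite E1. pose proof (Rpower_pos l (2 - 4 * sigma)). pose proof (Rpower_pos l (2 * sigma)).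
  field. split; lra.
Qed.

Lemma rp_small delta sigma : 0 <= delta -> 0 < sigma < 1 / 2 ->
  exists M, 0 < M /\ forall l, M < l -> delta * Rpower l (2 * sigma) <= l / 5.
Proof.
  intros Hd Hs. set (M := Rpower (5 * delta + 1) (1 / (1 - 2 * sigma))).
  exists M. split; [apply Rpower_pos|]. intros l Hl.
  assert (HM : 0 < M) by apply Rpower_pos.
  assert (H1 : Rpower M (1 - 2 * sigma) = 5 * delta + 1).
  { unfold M. rewrite Rpower_mult. replace (1 / (1 - 2 * sigma) * (1 - 2 * sigma)) with 1 by (field; lra).
    apply Rpower_1. lra. }
  assert (H2 : Rpower M (1 - 2 * sigma) < Rpower l (1 - 2 * sigma)).
  { apply Rlt_Rpower_l; lra. }
  assert (H3 : l = Rpower l (2 * sigma) * Rpower l (1 - 2 * sigma)).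
  { rewrite <- Rpower_plus. replace (2 * sigma + (1 - 2 * sigma)) with 1 by ring.
    rewrite Rpower_1; lra. }
  pose proof (Rpower_pos l (2 * sigma)).
  rewrite H3 at 2. nra.
Qed.

Lemma gamma_gam c0 c1 c2 A delta sigma e l t :
  gamma c0 c1 c2 A delta sigma e l t = gam c0 c1 c2 A e l (delta ^ 2 / Rpower l (2 - 4 * sigma)) t.
Proof. reflexivity. Qed.

Lemma part3 (mu1 mu2 delta sigma K : R) (c0 c1 c2 A : R -> R) (lam eps : nat -> R) (w w1 : nat -> R -> R)
  (Hmu1 : 0 < mu1) (Hmu12 : mu1 < mu2) (Hdelta : 0 <= delta) (Hsigma : 0 < sigma < 1 / 2)
  (Hc1 : forall t, 0 <= t -> deriv_nonneg c0 t (c1 t))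
  (Hc2 : forall t, 0 <= t -> deriv_nonneg c1 t (c2 t))
  (Hbnd : forall t, 0 <= t -> mu1 <= c0 t <= mu2)
  (HK1 : forall t, 0 <= t -> Rabs (c1 t) <= K)
  (HK2 : forall t, 0 <= t -> Rabs (c2 t) <= K)
  (HA0 : A 0 = 0)
  (HA : forall t, 0 <= t -> deriv_nonneg A t (sqrt (c0 t)))
  (Hlam : forall n, 0 < lam n) (Heps : forall n, 0 < eps n)
  (Hlaminf : cv_infty lam) (Heps0 : Un_cv eps 0)
  (Hw : forall n t, 0 <= t -> deriv_nonneg (w n) t (w1 n t))
  (Hw1 : forall n t, 0 <= t -> deriv_nonneg (w1 n) t
      (- (2 * delta * Rpower (lam n) (2 * sigma) * w1 n t
          + lam n ^ 2 * gamma c0 c1 c2 A delta sigma (eps n) (lam n) t * w n t)))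
  (Hw0 : forall n, w n 0 = 0) (Hw10 : forall n, w1 n 0 = 1) :
  exists N : nat, forall n, (N <= n)%nat -> forall t, 0 <= t ->
      w1 n t ^ 2 + lam n ^ 2 * w n t ^ 2 >=
      mu1 * Rmin 1 mu1 / (2 * mu2 ^ 2) * exp (1 / (4 * sqrt mu2) * eps n * lam n * t
                 - 2 * delta * Rpower (lam n) (2 * sigma) * t).
Proof.
  destruct (rp_small delta sigma Hdelta Hsigma) as [M0 [HM0 HM0']].
  assert (Hln : ln (mu1 / mu2) < 0).
  { rewrite <- ln_1. apply ln_increasing. apply Rdiv_lt_0_compat; lra.
    apply (Rmult_lt_reg_r mu2); [lra|]. unfold Rdiv. rewrite Rmult_assoc, Rinv_l by lra. lra. }
  set (e0 := Rmin (2 * sqrt mu1 / 5) (- 4 * mu1 * ln (mu1 / mu2))).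
  assert (He0 : 0 < e0).
  { apply Rmin_pos. pose proof (sqrt_lt_R0 mu1 Hmu1). lra. nra. }
  set (L0 := Rmax M0 (Rmax (K * sqrt mu2 / mu1 ^ 2) (5 * K / (4 * mu1)))).
  destruct (ev_and _ _ (ev_lam lam L0 Hlaminf) (ev_eps eps e0 Heps0 He0)) as [N HN].
  exists N. intros n Hn.
  destruct (HN n Hn) as [Hl He]. clear HN.
  set (l := lam n) in *. set (e := eps n) in *. set (d := delta * Rpower l (2 * sigma)).
  pose proof (Hlam n) as Hl0. pose proof (Heps n) as He00. fold l e in Hl0, He00.
  rewrite Rabs_pos_eq in He by lra.
  pose proof (Rmax_l M0 (Rmax (K * sqrt mu2 / mu1 ^ 2) (5 * K / (4 * mu1)))) as L1.
  pose proof (Rmax_r M0 (Rmax (K * sqrt mu2 / mu1 ^ 2) (5 * K / (4 * mu1)))) as L2.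
  pose proof (Rmax_l (K * sqrt mu2 / mu1 ^ 2) (5 * K / (4 * mu1))) as L3.
  pose proof (Rmax_r (K * sqrt mu2 / mu1 ^ 2) (5 * K / (4 * mu1))) as L4.
  fold L0 in L1, L2.
  pose proof (Rmin_l (2 * sqrt mu1 / 5) (- 4 * mu1 * ln (mu1 / mu2))) as E1.
  pose proof (Rmin_r (2 * sqrt mu1 / 5) (- 4 * mu1 * ln (mu1 / mu2))) as E2.
  fold e0 in E1, E2.
  assert (Hd : 0 <= d) by (unfold d; apply Rmult_le_pos; [lra|left; apply Rpower_pos]).
  assert (Hr3 : d <= l / 5) by (apply HM0'; lra).
  assert (Hmu1sq : 0 < mu1 ^ 2) by (apply pow_lt; lra).
  assert (HlamK : K * sqrt mu2 <= l * mu1 ^ 2).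
  { assert (K * sqrt mu2 / mu1 ^ 2 < l) by lra.
    replace (K * sqrt mu2) with ((K * sqrt mu2 / mu1 ^ 2) * mu1 ^ 2) by (field; lra).
    apply Rmult_le_compat_r; lra. }
  assert (Hr1 : e / (2 * sqrt mu1) <= 1 / 5).
  { pose proof (sqrt_lt_R0 mu1 Hmu1).
    assert (e <= 2 * sqrt mu1 / 5) by lra.
    replace (e / (2 * sqrt mu1)) with (e * / (2 * sqrt mu1)) by reflexivity.
    apply (Rle_trans _ (2 * sqrt mu1 / 5 * / (2 * sqrt mu1))).
    apply Rmult_le_compat_r; [left; apply Rinv_0_lt_compat; lra|lra].
    right; field; lra. }
  assert (Hr2 : K / (4 * mu1) <= l / 5).
  { assert (5 * K / (4 * mu1) < l) by lra.
    replace (K / (4 * mu1)) with (5 * K / (4 * mu1) / 5) by (field; lra). lra. }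
  assert (Hexp : mu1 / mu2 <= exp (- (e / (4 * mu1)))).
  { rewrite <- (exp_ln (mu1 / mu2)) by (apply Rdiv_lt_0_compat; lra).
    left; apply exp_increasing.
    assert (e < - 4 * mu1 * ln (mu1 / mu2)) by lra.
    apply (Rmult_lt_reg_r (4 * mu1)); [lra|].
    replace (- (e / (4 * mu1)) * (4 * mu1)) with (- e) by (field; lra). lra. }
  destruct (antider _ (Gcont mu1 mu2 c0 c1 A Hmu1 Hc1 HA Hbnd l)) as [Phi [HPhi0 HPhi]].
  set (B := mu2 + d ^ 2 / l ^ 2 + Dn mu1 K e l).
  assert (HB : forall t, 0 <= t -> Rabs (gam c0 c1 c2 A e l (d ^ 2 / l ^ 2) t) <= B).
  { intros t Ht. pose proof (gam_bound mu1 mu2 K c0 c1 c2 A e l (d ^ 2 / l ^ 2) t Hmu1 (Hbnd t Ht)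
      (HK1 t Ht) (HK2 t Ht) ltac:(lra) Hl0).
    set (g := gam c0 c1 c2 A e l (d ^ 2 / l ^ 2) t) in *.
    replace g with ((g - c0 t - d ^ 2 / l ^ 2) + c0 t + d ^ 2 / l ^ 2) by ring.
    pose proof (Rabs_triang (g - c0 t - d ^ 2 / l ^ 2 + c0 t) (d ^ 2 / l ^ 2)).
    pose proof (Rabs_triang (g - c0 t - d ^ 2 / l ^ 2) (c0 t)).
    pose proof (Hbnd t Ht).
    rewrite (Rabs_pos_eq (c0 t)) in H1 by lra.
    rewrite (Rabs_pos_eq (d ^ 2 / l ^ 2)) in H0.
    2:{ apply Rmult_le_pos; [apply pow2_ge_0|left; apply Rinv_0_lt_compat, pow_lt; lra]. }
    unfold B. lra. }
  assert (Hyz : forall t, 0 <= t -> w n t - y c0 c1 A l e d Phi t = 0 /\ w1 n t - Y1 c0 c1 c2 A l e d Phi t = 0).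
  { apply (uniq (fun t => w n t - y c0 c1 A l e d Phi t) (fun t => w1 n t - Y1 c0 c1 c2 A l e d Phi t)
       (gam c0 c1 c2 A e l (d ^ 2 / l ^ 2)) d l B Hd Hl0 HB).
    - intros s0 Hs0. apply nonneg_minus. exact (Hw n s0 Hs0).
      apply dpl_nonneg. exact (dy mu1 mu2 c0 c1 c2 A Hmu1 Hc1 HA Hbnd l e d Hl0 Phi HPhi s0 Hs0).
    - intros s1 Hs1. eapply nonneg_val.
      2:{ apply nonneg_minus. exact (Hw1 n s1 Hs1). apply dpl_nonneg. exact (dY1 mu1 mu2 c0 c1 c2 A Hmu1 Hc1 Hc2 HA Hbnd l e d Hl0 Phi HPhi s1 Hs1). }
      rewrite gamma_gam. fold l e. rewrite <- (rp_d l delta sigma Hl0). fold d. unfold d. ring.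
    - rewrite Hw0. rewrite (y0 c0 c1 A HA0). ring.
    - rewrite Hw10. rewrite (Y10 mu1 mu2 c0 c1 c2 A Hmu1 HA0 Hbnd l e d Hl0 Phi HPhi0). ring. }
  intros t Ht. destruct (Hyz t Ht) as [Z1 Z2].
  replace (w1 n t) with (Y1 c0 c1 c2 A l e d Phi t) by lra.
  replace (w n t) with (y c0 c1 A l e d Phi t) by lra.
  replace (2 * delta * Rpower l (2 * sigma) * t) with (2 * d * t) by (unfold d; ring).
  eapply energy; eauto. lra.
Qed.

Lemma Dn_small mu1 K : 0 < mu1 -> 0 <= K -> forall eta, 0 < eta ->
  exists e1 L, 0 < e1 /\ forall e l, 0 <= e < e1 -> L < l -> Dn mu1 K e l < eta.
Proof.
  intros Hm HK eta Heta.
  pose proof (sqrt_lt_R0 mu1 Hm) as Hs.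
  set (Ce := 1 + 1 / (4 * mu1) + K / (2 * (mu1 * sqrt mu1))).
  set (Cl := 5 * K ^ 2 / (16 * mu1 ^ 2) + K / (4 * mu1)).
  assert (HCe : 1 <= Ce).
  { unfold Ce. assert (0 <= 1 / (4 * mu1)) by (apply Rdiv_le_0_compat; lra).
    assert (0 <= K / (2 * (mu1 * sqrt mu1))) by (apply Rdiv_le_0_compat; [lra|]; nra). lra. }
  assert (HCl : 0 <= Cl).
  { unfold Cl. assert (0 <= 5 * K ^ 2 / (16 * mu1 ^ 2)) by (apply Rdiv_le_0_compat; [nra|]; nra).
    assert (0 <= K / (4 * mu1)) by (apply Rdiv_le_0_compat; lra). lra. }
  exists (Rmin 1 (eta / (2 * Ce))), (Rmax 1 (2 * Cl / eta + 1)). split.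
  { apply Rmin_pos; [lra|]. apply Rdiv_lt_0_compat; lra. }
  intros e l He Hl.
  pose proof (Rmin_l 1 (eta / (2 * Ce))). pose proof (Rmin_r 1 (eta / (2 * Ce))).
  pose proof (Rmax_l 1 (2 * Cl / eta + 1)). pose proof (Rmax_r 1 (2 * Cl / eta + 1)).
  assert (Hl1 : 1 < l) by lra.
  assert (Hb : Dn mu1 K e l <= e * Ce + Cl / l).
  { unfold Dn, Ce, Cl.
    assert (e ^ 2 / (4 * mu1) <= e * (1 / (4 * mu1))).
    { unfold Rdiv. rewrite <- Rmult_assoc. apply Rmult_le_compat_r; [left; apply Rinv_0_lt_compat; lra|]. nra. }
    assert (5 * K ^ 2 / (16 * l ^ 2 * mu1 ^ 2) <= 5 * K ^ 2 / (16 * mu1 ^ 2) / l).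
    { replace (5 * K ^ 2 / (16 * l ^ 2 * mu1 ^ 2)) with (5 * K ^ 2 / (16 * mu1 ^ 2) / l * / l) by (field; lra).
      assert (0 <= 5 * K ^ 2 / (16 * mu1 ^ 2) / l) by (apply Rdiv_le_0_compat; [apply Rdiv_le_0_compat|]; nra).
      assert (/ l <= 1) by (rewrite <- Rinv_1; apply Rinv_le_contravar; lra). nra. }
    assert (e * K / (2 * l * (mu1 * sqrt mu1)) <= e * (K / (2 * (mu1 * sqrt mu1)))).
    { replace (e * K / (2 * l * (mu1 * sqrt mu1))) with (e * (K / (2 * (mu1 * sqrt mu1))) * / l) by (field; lra).
      assert (0 <= e * (K / (2 * (mu1 * sqrt mu1)))) by (apply Rmult_le_pos; [lra|apply Rdiv_le_0_compat; nra]).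
      assert (/ l <= 1) by (rewrite <- Rinv_1; apply Rinv_le_contravar; lra). nra. }
    assert (K / (4 * l ^ 2 * mu1) <= K / (4 * mu1) / l).
    { replace (K / (4 * l ^ 2 * mu1)) with (K / (4 * mu1) / l * / l) by (field; lra).
      assert (0 <= K / (4 * mu1) / l) by (apply Rdiv_le_0_compat; [apply Rdiv_le_0_compat|]; lra).
      assert (/ l <= 1) by (rewrite <- Rinv_1; apply Rinv_le_contravar; lra). nra. }
    replace ((5 * K ^ 2 / (16 * mu1 ^ 2) + K / (4 * mu1)) / l) with
      (5 * K ^ 2 / (16 * mu1 ^ 2) / l + K / (4 * mu1) / l) by (field; lra).
    lra. }
  assert (HH1 : e * Ce < eta / 2).
  { apply (Rle_lt_trans _ (e * Ce)); [lra|].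
    apply (Rlt_le_trans _ (eta / (2 * Ce) * Ce)). apply Rmult_lt_compat_r; lra.
    right; field; lra. }
  assert (HH2 : Cl / l < eta / 2).
  { assert (2 * Cl / eta + 1 < l) by lra.
    apply (Rmult_lt_reg_r l); [lra|]. replace (Cl / l * l) with Cl by (field; lra).
    assert (2 * Cl / eta * eta = 2 * Cl) by (field; lra).
    assert (2 * Cl / eta < l) by lra. nra. }
  lra.
Qed.

Lemma dd_small delta sigma : 0 < sigma < 1 / 2 -> forall eta, 0 < eta ->
  exists L, 0 < L /\ forall l, L < l -> delta ^ 2 / Rpower l (2 - 4 * sigma) < eta.
Proof.
  intros Hs eta Heta.
  set (X := delta ^ 2 / eta + 1).
  assert (HX : 0 < X) by (unfold X; pose proof (pow2_ge_0 delta); assert (0 <= delta ^ 2 / eta) by (apply Rdiv_le_0_compat; lra); lra).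
  exists (Rpower X (1 / (2 - 4 * sigma))). split; [apply Rpower_pos|].
  intros l Hl.
  assert (H1 : Rpower (Rpower X (1 / (2 - 4 * sigma))) (2 - 4 * sigma) = X).
  { rewrite Rpower_mult. replace (1 / (2 - 4 * sigma) * (2 - 4 * sigma)) with 1 by (field; lra).
    apply Rpower_1; auto. }
  assert (H2 : X < Rpower l (2 - 4 * sigma)).
  { rewrite <- H1. apply Rlt_Rpower_l; [lra|]. split; [apply Rpower_pos|auto]. }
  apply (Rmult_lt_reg_r (Rpower l (2 - 4 * sigma))); [apply Rpower_pos|].
  replace (delta ^ 2 / Rpower l (2 - 4 * sigma) * Rpower l (2 - 4 * sigma)) with (delta ^ 2)
    by (field; apply Rgt_not_eq, Rpower_pos).
  assert (delta ^ 2 < eta * X) by (unfold X; field_simplify; [|lra]; nra || (replace (eta * (delta ^ 2 / eta + 1)) with (delta ^ 2 + eta) by (field; lra); lra)).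
  nra.
Qed.

Lemma part1 (mu1 mu2 delta sigma K : R) (c0 c1 c2 A : R -> R) (lam eps : nat -> R)
  (Hmu1 : 0 < mu1) (Hsigma : 0 < sigma < 1 / 2)
  (Hbnd : forall t, 0 <= t -> mu1 <= c0 t <= mu2)
  (HK1 : forall t, 0 <= t -> Rabs (c1 t) <= K)
  (HK2 : forall t, 0 <= t -> Rabs (c2 t) <= K)
  (Hlam : forall n, 0 < lam n) (Heps : forall n, 0 < eps n)
  (Hlaminf : cv_infty lam) (Heps0 : Un_cv eps 0) :
  forall eta, 0 < eta -> exists N : nat, forall n, (N <= n)%nat ->
      forall t, 0 <= t -> Rabs (gamma c0 c1 c2 A delta sigma (eps n) (lam n) t - c0 t) < eta.
Proof.
  intros eta Heta.
  assert (HK : 0 <= K) by (pose proof (HK1 0 (Rle_refl 0)); pose proof (Rabs_pos (c1 0)); lra).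
  destruct (Dn_small mu1 K Hmu1 HK (eta / 2) ltac:(lra)) as [e1 [L1 [He1 HD]]].
  destruct (dd_small delta sigma Hsigma (eta / 2) ltac:(lra)) as [L2 [HL2 Hdd]].
  destruct (ev_and _ _ (ev_lam lam (Rmax L1 L2) Hlaminf) (ev_eps eps e1 Heps0 He1)) as [N HN].
  exists N. intros n Hn t Ht. destruct (HN n Hn) as [Hl He].
  pose proof (Rmax_l L1 L2). pose proof (Rmax_r L1 L2).
  pose proof (Heps n). rewrite Rabs_pos_eq in He by lra.
  rewrite gamma_gam.
  set (dd := delta ^ 2 / Rpower (lam n) (2 - 4 * sigma)).
  pose proof (gam_bound mu1 mu2 K c0 c1 c2 A (eps n) (lam n) dd t Hmu1 (Hbnd t Ht) (HK1 t Ht) (HK2 t Ht)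
     ltac:(lra) (Hlam n)).
  assert (Hdd0 : 0 <= dd) by (unfold dd; apply Rdiv_le_0_compat; [apply pow2_ge_0|apply Rpower_pos]).
  assert (Hdd1 : dd < eta / 2) by (apply Hdd; lra).
  assert (HD1 : Dn mu1 K (eps n) (lam n) < eta / 2) by (apply HD; lra).
  set (g := gam c0 c1 c2 A (eps n) (lam n) dd t) in *.
  replace (g - c0 t) with ((g - c0 t - dd) + dd) by ring.
  pose proof (Rabs_triang (g - c0 t - dd) dd) as HT. rewrite (Rabs_pos_eq dd) in HT by lra.
  lra.
Qed.

Lemma sin_lip x y : Rabs (sin x - sin y) <= Rabs (x - y).
Proof.
  assert (K : forall x y, y < x -> Rabs (sin x - sin y) <= Rabs (x - y)).
  { intros u v Huv. destruct (MVT_cor2 sin cos v u Huv) as [c [Hc _]].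
    { intros; apply derivable_pt_lim_sin. }
    rewrite Hc, Rabs_mult. pose proof (COS_bound c). pose proof (Rabs_pos (u - v)).
    assert (Rabs (cos c) <= 1) by (apply Rabs_le; lra). nra. }
  destruct (Rtotal_order x y) as [H|[H|H]].
  - rewrite (Rabs_minus_sym (sin x)), (Rabs_minus_sym x). auto.
  - subst. rewrite !Rminus_diag, Rabs_R0. lra.
  - auto.
Qed.

Definition LBl (l : R) (f : R -> R) (M a b : R) :=
  0 <= a /\ 0 <= b /\ (forall t, 0 <= t -> Rabs (f t) <= M) /\
  (forall t s, 0 <= t -> 0 <= s -> Rabs (f t - f s) <= (a + b * l) * Rabs (t - s)).

Lemma LBl_M l f M a b : LBl l f M a b -> 0 <= M.
Proof. intros [_ [_ [H _]]]. pose proof (H 0 (Rle_refl 0)). pose proof (Rabs_pos (f 0)). lra. Qed.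

Lemma LBl_mult l f g M1 a1 b1 M2 a2 b2 : 0 <= l -> LBl l f M1 a1 b1 -> LBl l g M2 a2 b2 ->
  LBl l (fun t => f t * g t) (M1 * M2) (M1 * a2 + M2 * a1) (M1 * b2 + M2 * b1).
Proof.
  intros Hl H1 H2. pose proof (LBl_M _ _ _ _ _ H1) as HM1. pose proof (LBl_M _ _ _ _ _ H2) as HM2.
  destruct H1 as [Ha1 [Hb1 [HB1 HL1]]]. destruct H2 as [Ha2 [Hb2 [HB2 HL2]]].
  split; [nra|]. split; [nra|]. split.
  - intros t Ht. rewrite Rabs_mult. pose proof (HB1 t Ht); pose proof (HB2 t Ht).
    apply Rmult_le_compat; auto; apply Rabs_pos.
  - intros t s Ht Hs.
    replace (f t * g t - f s * g s) with (f t * (g t - g s) + g s * (f t - f s)) by ring.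
    eapply Rle_trans; [apply Rabs_triang|]. rewrite !Rabs_mult.
    pose proof (HB1 t Ht); pose proof (HB2 s Hs). pose proof (HL1 t s Ht Hs); pose proof (HL2 t s Ht Hs).
    pose proof (Rabs_pos (f t)); pose proof (Rabs_pos (g s)); pose proof (Rabs_pos (t - s)).
    pose proof (Rabs_pos (g t - g s)); pose proof (Rabs_pos (f t - f s)).
    assert (Rabs (f t) * Rabs (g t - g s) <= M1 * ((a2 + b2 * l) * Rabs (t - s))) by (apply Rmult_le_compat; auto).
    assert (Rabs (g s) * Rabs (f t - f s) <= M2 * ((a1 + b1 * l) * Rabs (t - s))) by (apply Rmult_le_compat; auto).
    nra.
Qed.

Lemma LBl_plus l f g M1 a1 b1 M2 a2 b2 : LBl l f M1 a1 b1 -> LBl l g M2 a2 b2 ->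
  LBl l (fun t => f t + g t) (M1 + M2) (a1 + a2) (b1 + b2).
Proof.
  intros [Ha1 [Hb1 [HB1 HL1]]] [Ha2 [Hb2 [HB2 HL2]]].
  split; [lra|]. split; [lra|]. split.
  - intros t Ht. eapply Rle_trans; [apply Rabs_triang|]. pose proof (HB1 t Ht); pose proof (HB2 t Ht). lra.
  - intros t s Ht Hs. replace (f t + g t - (f s + g s)) with ((f t - f s) + (g t - g s)) by ring.
    eapply Rle_trans; [apply Rabs_triang|]. pose proof (HL1 t s Ht Hs); pose proof (HL2 t s Ht Hs). nra.
Qed.

Lemma LBl_scal l c f M a b : LBl l f M a b ->
  LBl l (fun t => c * f t) (Rabs c * M) (Rabs c * a) (Rabs c * b).
Proof.
  intros [Ha [Hb [HB HL]]]. pose proof (Rabs_pos c).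
  split; [nra|]. split; [nra|]. split.
  - intros t Ht. rewrite Rabs_mult. apply Rmult_le_compat_l; auto.
  - intros t s Ht Hs. replace (c * f t - c * f s) with (c * (f t - f s)) by ring.
    rewrite Rabs_mult. replace ((Rabs c * a + Rabs c * b * l) * Rabs (t - s)) with
      (Rabs c * ((a + b * l) * Rabs (t - s))) by ring.
    apply Rmult_le_compat_l; auto.
Qed.

Lemma LBl_inv l f m M a b : 0 < m -> (forall t, 0 <= t -> m <= f t) -> LBl l f M a b ->
  LBl l (fun t => 1 / f t) (1 / m) (a / m ^ 2) (b / m ^ 2).
Proof.
  intros Hm Hf [Ha [Hb [HB HL]]].
  assert (Hm2 : 0 < m ^ 2) by (apply pow_lt; lra).
  split; [apply Rdiv_le_0_compat; lra|]. split; [apply Rdiv_le_0_compat; lra|]. split.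
  - intros t Ht. pose proof (Hf t Ht). rewrite Rabs_pos_eq by (apply Rdiv_le_0_compat; lra).
    unfold Rdiv. rewrite !Rmult_1_l. apply Rinv_le_contravar; lra.
  - intros t s Ht Hs. pose proof (Hf t Ht); pose proof (Hf s Hs).
    replace (1 / f t - 1 / f s) with ((f s - f t) / (f t * f s)) by (field; lra).
    unfold Rdiv at 1. rewrite Rabs_mult, Rabs_inv, (Rabs_pos_eq (f t * f s)) by nra.
    rewrite Rabs_minus_sym. pose proof (HL t s Ht Hs).
    replace ((a / m ^ 2 + b / m ^ 2 * l) * Rabs (t - s)) with ((a + b * l) * Rabs (t - s) * / m ^ 2) by (field; lra).
    apply Rmult_le_compat; auto. apply Rabs_pos. left; apply Rinv_0_lt_compat; nra.
    apply Rinv_le_contravar; auto. simpl. rewrite Rmult_1_r. apply Rmult_le_compat; lra.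
Qed.

Lemma LBl_sqrt l f m M a b : 0 < m -> (forall t, 0 <= t -> m <= f t) -> LBl l f M a b ->
  LBl l (fun t => sqrt (f t)) (sqrt M) (a / (2 * sqrt m)) (b / (2 * sqrt m)).
Proof.
  intros Hm Hf [Ha [Hb [HB HL]]].
  pose proof (sqrt_lt_R0 m Hm) as Hsm.
  split; [apply Rdiv_le_0_compat; lra|]. split; [apply Rdiv_le_0_compat; lra|]. split.
  - intros t Ht. pose proof (Hf t Ht). rewrite Rabs_pos_eq by apply sqrt_pos.
    apply sqrt_le_1_alt. pose proof (HB t Ht). rewrite Rabs_pos_eq in H0; lra.
  - intros t s Ht Hs. pose proof (Hf t Ht); pose proof (Hf s Hs).
    assert (St : sqrt m <= sqrt (f t)) by (apply sqrt_le_1_alt; lra).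
    assert (Ss : sqrt m <= sqrt (f s)) by (apply sqrt_le_1_alt; lra).
    replace (sqrt (f t) - sqrt (f s)) with ((f t - f s) / (sqrt (f t) + sqrt (f s))).
    2:{ assert (sqrt (f t) * sqrt (f t) = f t) by (apply sqrt_sqrt; lra).
        assert (sqrt (f s) * sqrt (f s) = f s) by (apply sqrt_sqrt; lra).
        field_simplify; [|lra]. rewrite <- H1 at 1. rewrite <- H2 at 1. field. lra. }
    unfold Rdiv at 1. rewrite Rabs_mult, Rabs_inv, (Rabs_pos_eq (sqrt (f t) + sqrt (f s))) by lra.
    pose proof (HL t s Ht Hs).
    replace ((a / (2 * sqrt m) + b / (2 * sqrt m) * l) * Rabs (t - s)) with
      ((a + b * l) * Rabs (t - s) * / (2 * sqrt m)) by (field; lra).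
    apply Rmult_le_compat; auto. apply Rabs_pos. left; apply Rinv_0_lt_compat; lra.
    apply Rinv_le_contravar; lra.
Qed.

Lemma LBl_sin l g a b : 0 <= a -> 0 <= b ->
  (forall t s, 0 <= t -> 0 <= s -> Rabs (g t - g s) <= (a + b * l) * Rabs (t - s)) ->
  LBl l (fun t => sin (g t)) 1 a b.
Proof.
  intros Ha Hb H. split; auto. split; auto. split.
  - intros; apply Rabs_le; pose proof (SIN_bound (g t)); lra.
  - intros t s Ht Hs. eapply Rle_trans; [apply sin_lip|]. auto.
Qed.

Lemma LBl_ext l f g M a b : (forall t, 0 <= t -> f t = g t) -> LBl l g M a b -> LBl l f M a b.
Proof.
  intros He [Ha [Hb [HB HL]]]. split; auto. split; auto. split.
  - intros; rewrite He; auto.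
  - intros; rewrite !He; auto.
Qed.

Lemma LBl_base l f f' M B : 0 <= B -> (forall t, 0 <= t -> deriv_nonneg f t (f' t)) ->
  (forall t, 0 <= t -> Rabs (f' t) <= B) -> (forall t, 0 <= t -> Rabs (f t) <= M) ->
  LBl l f M B 0.
Proof.
  intros HB Hd Hb HM. split; auto. split; [lra|]. split; auto.
  intros t s Ht Hs. replace (B + 0 * l) with B by ring. apply (lip f f'); auto.
Qed.

Lemma Rp_inv x y : 0 < x -> Rpower (/ x) y = / Rpower x y.
Proof. intros. unfold Rpower. rewrite ln_Rinv by auto. rewrite <- exp_Ropp. f_equal. ring. Qed.

Lemma Rp_div h al : 0 < h -> h / Rpower h al = Rpower h (1 - al).
Proof.
  intros. replace (1 - al) with (1 + - al) by ring. rewrite Rpower_plus, Rpower_1, Rpower_Ropp by auto.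
  reflexivity.
Qed.

Lemma Rp_le_l x y al : 0 <= al -> 0 < x <= y -> Rpower x al <= Rpower y al.
Proof. intros. apply Rle_Rpower_l; auto. Qed.

Lemma hold_U l f M a b al t s : 1 <= l -> 0 < al < 1 -> LBl l f M a b ->
  0 <= t -> 0 <= s -> t <> s ->
  Rabs (f t - f s) / Rpower (Rabs (t - s)) al <= Rpower l al * (2 * M + a + b).
Proof.
  intros Hl Hal HL Ht Hs Hts.
  pose proof (LBl_M _ _ _ _ _ HL) as HM. destruct HL as [Ha [Hb [HB HLip]]].
  set (h := Rabs (t - s)).
  assert (Hh : 0 < h) by (unfold h; apply Rabs_pos_lt; lra).
  set (X := Rabs (f t - f s)).
  assert (HX0 : 0 <= X) by apply Rabs_pos.
  assert (HX1 : X <= 2 * M).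
  { unfold X. unfold Rminus. eapply Rle_trans; [apply Rabs_triang|]. rewrite Rabs_Ropp.
    pose proof (HB t Ht); pose proof (HB s Hs). lra. }
  assert (HX2 : X <= (a + b * l) * h) by (apply HLip; auto).
  pose proof (Rpower_pos h al) as Hha. pose proof (Rpower_pos l al) as Hla.
  assert (Hab : 0 <= 2 * M + a + b) by lra.
  destruct (Rle_lt_dec (/ l) h) as [H1|H1].
  - assert (Hp : / Rpower l al <= Rpower h al).
    { rewrite <- Rp_inv by lra. apply Rp_le_l; [lra|]. split; [apply Rinv_0_lt_compat; lra|auto]. }
    apply (Rle_trans _ (2 * M * Rpower l al)).
    + unfold Rdiv. apply (Rle_trans _ (2 * M * / Rpower h al)).
      * apply Rmult_le_compat_r; [left; apply Rinv_0_lt_compat|]; lra.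
      * apply Rmult_le_compat_l; [lra|]. rewrite <- (Rinv_inv (Rpower l al)).
        apply Rinv_le_contravar; auto. apply Rinv_0_lt_compat; lra.
    + rewrite Rmult_comm. apply Rmult_le_compat_l; lra.
  - assert (Hp : Rpower h (1 - al) <= / Rpower l (1 - al)).
    { rewrite <- Rp_inv by lra. apply Rp_le_l; lra. }
    assert (Hl1 : Rpower l (1 - al) = l / Rpower l al) by (rewrite Rp_div; auto; lra).
    apply (Rle_trans _ ((a + b * l) * Rpower h (1 - al))).
    + rewrite <- Rp_div by auto. unfold Rdiv. rewrite <- Rmult_assoc.
      apply Rmult_le_compat_r; [left; apply Rinv_0_lt_compat; lra|auto].
    + apply (Rle_trans _ ((a + b * l) * / Rpower l (1 - al))).
      * apply Rmult_le_compat_l; [nra|auto].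
      * rewrite Hl1. replace ((a + b * l) * / (l / Rpower l al)) with (Rpower l al * (a / l + b)) by (field; lra).
        apply Rmult_le_compat_l; [lra|].
        assert (a / l <= a).
        { unfold Rdiv. rewrite <- (Rmult_1_r a) at 2. apply Rmult_le_compat_l; auto.
          rewrite <- Rinv_1. apply Rinv_le_contravar; lra. }
        lra.
Qed.

Lemma interp X A0 B0 h al : 0 <= X -> 0 < A0 -> 0 < B0 -> 0 < h -> 0 < al < 1 ->
  X <= A0 -> X <= B0 * h -> X / Rpower h al <= Rpower A0 (1 - al) * Rpower B0 al.
Proof.
  intros HX HA HB Hh Hal H1 H2.
  pose proof (Rpower_pos h al) as Hha.
  destruct (Rle_lt_or_eq_dec 0 X HX) as [HXp|HX0].
  - assert (HXe : X = Rpower X (1 - al) * Rpower X al).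
    { rewrite <- Rpower_plus. replace (1 - al + al) with 1 by ring. rewrite Rpower_1; auto. }
    assert (E1 : Rpower X (1 - al) <= Rpower A0 (1 - al)) by (apply Rp_le_l; lra).
    assert (E2 : Rpower X al <= Rpower (B0 * h) al) by (apply Rp_le_l; [lra|]; split; auto).
    rewrite <- Rpower_mult_distr in E2 by auto.
    pose proof (Rpower_pos X (1 - al)). pose proof (Rpower_pos X al).
    pose proof (Rpower_pos B0 al).
    apply (Rmult_le_reg_r (Rpower h al)); auto.
    replace (X / Rpower h al * Rpower h al) with X by (field; lra).
    rewrite HXe at 1. rewrite Rmult_assoc. apply Rmult_le_compat; lra.
  - rewrite <- HX0. unfold Rdiv. rewrite Rmult_0_l.
    apply Rmult_le_pos; left; apply Rpower_pos.
Qed.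

Definition U1 (c0 A : R -> R) l t :=
  -1/4 * ((sin (l * A t) * (sin (l * A t) * (sin (l * A t) * sin (l * A t)))) * (1 / c0 t)).
Definition U2 (c0 c1 c2 : R -> R) t :=
  -5/16 * ((c1 t * (1 / c0 t)) * (c1 t * (1 / c0 t))) + 1/4 * (c2 t * (1 / c0 t)).
Definition U3 (c0 c1 A : R -> R) l t :=
  1/2 * ((c1 t * (1 / (c0 t * sqrt (c0 t)))) * (sin (l * A t) * sin (l * A t))).

Lemma U_LB (mu1 mu2 K : R) (c0 c1 c2 c3 A : R -> R)
  (Hmu1 : 0 < mu1)
  (Hc1 : forall t, 0 <= t -> deriv_nonneg c0 t (c1 t))
  (Hc2 : forall t, 0 <= t -> deriv_nonneg c1 t (c2 t))
  (Hc3 : forall t, 0 <= t -> deriv_nonneg c2 t (c3 t))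
  (HA : forall t, 0 <= t -> deriv_nonneg A t (sqrt (c0 t)))
  (Hbnd : forall t, 0 <= t -> mu1 <= c0 t <= mu2)
  (HK1 : forall t, 0 <= t -> Rabs (c1 t) <= K)
  (HK2 : forall t, 0 <= t -> Rabs (c2 t) <= K)
  (HK3 : forall t, 0 <= t -> Rabs (c3 t) <= K) :
  exists M1 a1 b1 M2 a2 b2 M3 a3 b3, forall l, 0 <= l ->
    LBl l (U1 c0 A l) M1 a1 b1 /\ LBl l (U2 c0 c1 c2) M2 a2 b2 /\ LBl l (U3 c0 c1 A l) M3 a3 b3.
Proof.
  assert (HK : 0 <= K) by (pose proof (HK1 0 (Rle_refl 0)); pose proof (Rabs_pos (c1 0)); lra).
  assert (Hmu2 : 0 < mu2) by (pose proof (Hbnd 0 (Rle_refl 0)); lra).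
  pose proof (sqrt_lt_R0 mu1 Hmu1) as Hs1.
  pose proof (sqrt_lt_R0 mu2 Hmu2) as Hs2.
  assert (Lc0 : forall l, LBl l c0 mu2 K 0).
  { intros l. apply (LBl_base l c0 c1); auto. intros t Ht. pose proof (Hbnd t Ht).
    rewrite Rabs_pos_eq; lra. }
  assert (Lc1 : forall l, LBl l c1 K K 0).
  { intros l. apply (LBl_base l c1 c2); auto. }
  assert (Lc2 : forall l, LBl l c2 K K 0).
  { intros l. apply (LBl_base l c2 c3); auto. }
  assert (LS : forall l, 0 <= l -> LBl l (fun t => sin (l * A t)) 1 0 (sqrt mu2)).
  { intros l Hl. apply LBl_sin; [lra|lra|]. intros t s Ht Hs.
    replace (l * A t - l * A s) with (l * (A t - A s)) by ring. rewrite Rabs_mult, Rabs_pos_eq by lra.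
    pose proof (lip A (fun t => sqrt (c0 t)) (sqrt mu2) HA) as HL.
    assert (Rabs (A t - A s) <= sqrt mu2 * Rabs (t - s)).
    { apply HL; auto. intros u Hu. rewrite Rabs_pos_eq by apply sqrt_pos.
      apply sqrt_le_1_alt. pose proof (Hbnd u Hu); lra. }
    replace ((0 + sqrt mu2 * l) * Rabs (t - s)) with (l * (sqrt mu2 * Rabs (t - s))) by ring.
    apply Rmult_le_compat_l; auto. }
  assert (Lic0 : forall l, LBl l (fun t => 1 / c0 t) (1 / mu1) (K / mu1 ^ 2) (0 / mu1 ^ 2)).
  { intros l. eapply LBl_inv; [auto | | apply (Lc0 l)]. intros t Ht; pose proof (Hbnd t Ht); lra. }
  assert (Lsq : forall l, LBl l (fun t => sqrt (c0 t)) (sqrt mu2) (K / (2 * sqrt mu1)) (0 / (2 * sqrt mu1))).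
  { intros l. eapply LBl_sqrt; [auto | | apply (Lc0 l)]. intros t Ht; pose proof (Hbnd t Ht); lra. }
  do 9 eexists. intros l Hl. split; [|split].
  - unfold U1. apply LBl_scal. apply LBl_mult; auto.
    apply LBl_mult; auto. apply LBl_mult; auto. apply LBl_mult; auto.
  - unfold U2. apply LBl_plus; apply LBl_scal.
    + apply LBl_mult; auto; apply LBl_mult; auto.
    + apply LBl_mult; auto.
  - unfold U3. apply LBl_scal. apply LBl_mult; auto.
    + apply LBl_mult; auto. eapply (LBl_inv l _ (mu1 * sqrt mu1)).
      * apply Rmult_lt_0_compat; auto.
      * intros t Ht. pose proof (Hbnd t Ht). apply Rmult_le_compat; try lra. apply sqrt_le_1_alt; lra.
      * apply LBl_mult; auto.
    + apply LBl_mult; auto.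
Qed.

Lemma gamma_dec (c0 c1 c2 A : R -> R) delta sigma e l t : 0 < l -> c0 t <> 0 ->
  gamma c0 c1 c2 A delta sigma e l t =
  c0 t - e * sin (2 * (l * A t)) + (e ^ 2 * U1 c0 A l t + U2 c0 c1 c2 t / l ^ 2 + e / l * U3 c0 c1 A l t)
  + delta ^ 2 / Rpower l (2 - 4 * sigma).
Proof.
  intros Hl Hc. unfold gamma, U1, U2, U3. cbv zeta.
  assert (sqrt (c0 t) <> 0 \/ sqrt (c0 t) = 0) by (destruct (Req_dec (sqrt (c0 t)) 0); auto).
  destruct H as [H|H].
  - pose proof (Rpower_pos l (2 - 4 * sigma)). field.
    repeat split; try assumption; apply Rgt_not_eq; lra.
  - pose proof (Rpower_pos l (2 - 4 * sigma)).
    rewrite H. rewrite Rmult_0_r. unfold Rdiv. rewrite Rinv_0. field.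
    repeat split; try assumption; apply Rgt_not_eq; lra.
Qed.

Lemma sin_hold l mu2 A t s al : 0 < l -> 0 < mu2 -> 0 < al < 1 -> t <> s ->
  Rabs (A t - A s) <= sqrt mu2 * Rabs (t - s) ->
  Rabs (sin (2 * (l * A t)) - sin (2 * (l * A s))) / Rpower (Rabs (t - s)) al <=
  2 * Rpower mu2 (al / 2) * Rpower l al.
Proof.
  intros Hl Hm Hal Hts HA.
  pose proof (sqrt_lt_R0 mu2 Hm) as Hs.
  assert (Hh : 0 < Rabs (t - s)) by (apply Rabs_pos_lt; lra).
  eapply Rle_trans. apply (interp _ 2 (2 * l * sqrt mu2)); auto.
  - apply Rabs_pos.
  - lra.
  - apply Rmult_lt_0_compat; lra.
  - unfold Rminus. eapply Rle_trans; [apply Rabs_triang|]. rewrite Rabs_Ropp.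
    pose proof (SIN_bound (2 * (l * A t))). pose proof (SIN_bound (2 * (l * A s))).
    assert (Rabs (sin (2 * (l * A t))) <= 1) by (apply Rabs_le; lra).
    assert (Rabs (sin (2 * (l * A s))) <= 1) by (apply Rabs_le; lra). lra.
  - eapply Rle_trans; [apply sin_lip|].
    replace (2 * (l * A t) - 2 * (l * A s)) with ((2 * l) * (A t - A s)) by ring.
    rewrite Rabs_mult, (Rabs_pos_eq (2 * l)) by lra.
    replace (2 * l * sqrt mu2 * Rabs (t - s)) with ((2 * l) * (sqrt mu2 * Rabs (t - s))) by ring.
    apply Rmult_le_compat_l; lra.
  - right. rewrite <- !Rpower_mult_distr by (try apply Rmult_lt_0_compat; lra).
    rewrite <- Rpower_sqrt, Rpower_mult by lra.
    replace (/ 2 * al) with (al / 2) by field.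
    replace (Rpower 2 (1 - al) * (Rpower 2 al * Rpower l al * Rpower mu2 (al / 2)))
      with ((Rpower 2 (1 - al) * Rpower 2 al) * Rpower mu2 (al / 2) * Rpower l al) by ring.
    rewrite <- Rpower_plus. replace (1 - al + al) with 1 by ring. rewrite Rpower_1 by lra. ring.
Qed.

Lemma part2 (mu1 mu2 alpha delta sigma K : R) (c0 c1 c2 c3 A : R -> R) (lam eps : nat -> R)
  (Hmu1 : 0 < mu1) (Halpha : 0 < alpha < 1)
  (Hc1 : forall t, 0 <= t -> deriv_nonneg c0 t (c1 t))
  (Hc2 : forall t, 0 <= t -> deriv_nonneg c1 t (c2 t))
  (Hc3 : forall t, 0 <= t -> deriv_nonneg c2 t (c3 t))
  (HA : forall t, 0 <= t -> deriv_nonneg A t (sqrt (c0 t)))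
  (Hbnd : forall t, 0 <= t -> mu1 <= c0 t <= mu2)
  (HK1 : forall t, 0 <= t -> Rabs (c1 t) <= K)
  (HK2 : forall t, 0 <= t -> Rabs (c2 t) <= K)
  (HK3 : forall t, 0 <= t -> Rabs (c3 t) <= K)
  (Hlam : forall n, 0 < lam n) (Heps : forall n, 0 < eps n)
  (Hlaminf : cv_infty lam) (Heps0 : Un_cv eps 0) :
  forall H0 L, is_lub (Hold_set alpha c0) H0 ->
      is_limsup (fun n => eps n * Rpower (lam n) alpha) L ->
      forall eta, 0 < eta -> exists N : nat, forall n, (N <= n)%nat ->
        forall x, Hold_set alpha (fun t => gamma c0 c1 c2 A delta sigma (eps n) (lam n) t) x ->
          x <= Rmax H0 (2 * Rpower mu2 (alpha / 2) * L) + eta.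
Proof.
  intros H0 L HH0 HL eta Heta.
  assert (HK : 0 <= K) by (pose proof (HK1 0 (Rle_refl 0)); pose proof (Rabs_pos (c1 0)); lra).
  assert (Hmu2 : 0 < mu2) by (pose proof (Hbnd 0 (Rle_refl 0)); lra).
  destruct (U_LB mu1 mu2 K c0 c1 c2 c3 A Hmu1 Hc1 Hc2 Hc3 HA Hbnd HK1 HK2 HK3)
    as [M1 [a1 [b1 [M2 [a2 [b2 [M3 [a3 [b3 HU]]]]]]]]].
  destruct (HU 0 (Rle_refl 0)) as [HU1 [HU2 HU3]].
  pose proof (LBl_M _ _ _ _ _ HU1). pose proof (LBl_M _ _ _ _ _ HU2). pose proof (LBl_M _ _ _ _ _ HU3).
  destruct HU1 as [? [? _]]. destruct HU2 as [? [? _]]. destruct HU3 as [? [? _]].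
  set (C1 := 2 * M1 + a1 + b1). set (C2 := 2 * M2 + a2 + b2). set (C3 := 2 * M3 + a3 + b3).
  assert (HC1 : 0 <= C1) by (unfold C1; lra). assert (HC2 : 0 <= C2) by (unfold C2; lra).
  assert (HC3 : 0 <= C3) by (unfold C3; lra).
  set (eta4 := eta / 4).
  set (h0 := Rpower (eta4 / (K + 1)) (1 / (1 - alpha))).
  assert (Hh0 : 0 < h0) by apply Rpower_pos.
  assert (Hh0a : Rpower h0 (1 - alpha) = eta4 / (K + 1)).
  { unfold h0. rewrite Rpower_mult. replace (1 / (1 - alpha) * (1 - alpha)) with 1 by (field; lra).
    apply Rpower_1. unfold eta4. apply Rdiv_lt_0_compat; lra. }
  set (m2a := Rpower mu2 (alpha / 2)).
  assert (Hm2a : 0 < m2a) by apply Rpower_pos.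
  set (eta' := Rmin 1 (eta4 / (2 * m2a + 1))).
  assert (Heta' : 0 < eta') by (apply Rmin_pos; [lra|]; apply Rdiv_lt_0_compat; unfold eta4; lra).
  pose proof (Rmin_l 1 (eta4 / (2 * m2a + 1))) as Ee1. pose proof (Rmin_r 1 (eta4 / (2 * m2a + 1))) as Ee2.
  fold eta' in Ee1, Ee2.
  destruct (HL eta' Heta') as [[N1 HN1] _].
  set (Bb := Rabs L + 1).
  assert (HBb : L + eta' <= Bb) by (unfold Bb; pose proof (Rle_abs L); lra).
  assert (HBb0 : 0 < Bb) by (unfold Bb; pose proof (Rabs_pos L); lra).
  set (e1 := Rmin 1 (Rmin (eta4 / (2 * (Bb * C1 + C3 + 1))) (eta4 * Rpower h0 alpha / 2))).
  assert (He1 : 0 < e1).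
  { apply Rmin_pos; [lra|]. apply Rmin_pos.
    - apply Rdiv_lt_0_compat; unfold eta4; [lra|]. nra.
    - pose proof (Rpower_pos h0 alpha). unfold eta4. apply Rdiv_lt_0_compat; nra. }
  set (L0 := 2 * C2 / eta4 + 1).
  destruct (ev_and _ _ (ev_lam lam L0 Hlaminf) (ev_eps eps e1 Heps0 He1)) as [N2 HN2].
  exists (max N1 N2). intros n Hn x Hx.
  destruct (HN2 n ltac:(lia)) as [Hl He]. specialize (HN1 n ltac:(lia)). cbv beta in HN1.
  set (l := lam n) in *. set (e := eps n) in *.
  pose proof (Hlam n) as Hl0. pose proof (Heps n) as He0. fold l e in Hl0, He0.
  rewrite Rabs_pos_eq in He by lra.
  assert (HL0 : 1 < l) by (unfold L0 in Hl; assert (0 <= 2 * C2 / eta4) by (apply Rdiv_le_0_compat; unfold eta4; lra); lra).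
  pose proof (Rmin_l 1 (Rmin (eta4 / (2 * (Bb * C1 + C3 + 1))) (eta4 * Rpower h0 alpha / 2))) as F1.
  pose proof (Rmin_r 1 (Rmin (eta4 / (2 * (Bb * C1 + C3 + 1))) (eta4 * Rpower h0 alpha / 2))) as F2.
  pose proof (Rmin_l (eta4 / (2 * (Bb * C1 + C3 + 1))) (eta4 * Rpower h0 alpha / 2)) as F3.
  pose proof (Rmin_r (eta4 / (2 * (Bb * C1 + C3 + 1))) (eta4 * Rpower h0 alpha / 2)) as F4.
  fold e1 in F1, F2.
  destruct (HU l ltac:(lra)) as [LU1 [LU2 LU3]].
  destruct Hx as [t [s [Ht [Hs [Hts Hx]]]]]. rewrite Hx. clear Hx.
  set (h := Rabs (t - s)).
  assert (Hh : 0 < h) by (unfold h; apply Rabs_pos_lt; lra).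
  set (ha := Rpower h alpha).
  assert (Hha : 0 < ha) by apply Rpower_pos.
  set (la := Rpower l alpha).
  assert (Hla : 0 < la) by apply Rpower_pos.
  assert (Hlal : la <= l).
  { unfold la. rewrite <- (Rpower_1 l) at 2 by lra. apply Rle_Rpower; lra. }
  set (q0 := Rabs (c0 t - c0 s) / ha).
  set (qs := Rabs (sin (2 * (l * A t)) - sin (2 * (l * A s))) / ha).
  set (q1 := Rabs (U1 c0 A l t - U1 c0 A l s) / ha).
  set (q2 := Rabs (U2 c0 c1 c2 t - U2 c0 c1 c2 s) / ha).
  set (q3 := Rabs (U3 c0 c1 A l t - U3 c0 c1 A l s) / ha).
  assert (Hq0H : q0 <= H0).
  { destruct HH0 as [Hub _]. apply Hub. exists t, s. repeat split; auto. }
  assert (Hq0K : q0 <= K * Rpower h (1 - alpha)).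
  { unfold q0. rewrite <- Rp_div by auto. fold ha.
    unfold Rdiv. rewrite <- Rmult_assoc. apply Rmult_le_compat_r; [left; apply Rinv_0_lt_compat; auto|].
    apply (lip c0 c1); auto. }
  assert (Hqs : qs <= 2 * m2a * la).
  { unfold qs, m2a, la, ha, h. apply sin_hold; auto; try lra.
    apply (lip A (fun t => sqrt (c0 t))); auto. intros u Hu. rewrite Rabs_pos_eq by apply sqrt_pos.
    apply sqrt_le_1_alt. pose proof (Hbnd u Hu); lra. }
  assert (Hqs2 : qs <= 2 / ha).
  { unfold qs. unfold Rdiv. apply Rmult_le_compat_r; [left; apply Rinv_0_lt_compat; auto|].
    unfold Rminus. eapply Rle_trans; [apply Rabs_triang|]. rewrite Rabs_Ropp.
    pose proof (SIN_bound (2 * (l * A t))). pose proof (SIN_bound (2 * (l * A s))).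
    assert (Rabs (sin (2 * (l * A t))) <= 1) by (apply Rabs_le; lra).
    assert (Rabs (sin (2 * (l * A s))) <= 1) by (apply Rabs_le; lra). lra. }
  assert (Hq1 : q1 <= la * C1) by (apply hold_U; auto; lra).
  assert (Hq2 : q2 <= la * C2) by (apply hold_U; auto; lra).
  assert (Hq3 : q3 <= la * C3) by (apply hold_U; auto; lra).
  assert (Hq0p : 0 <= q0) by (apply Rdiv_le_0_compat; [apply Rabs_pos|auto]).
  assert (Hdec : Rabs (gamma c0 c1 c2 A delta sigma e l t - gamma c0 c1 c2 A delta sigma e l s) / ha
                 <= q0 + e * qs + (e ^ 2 * q1 + q2 / l ^ 2 + e / l * q3)).
  { pose proof (Hbnd t Ht). pose proof (Hbnd s Hs).
    rewrite (gamma_dec c0 c1 c2 A delta sigma e l t), (gamma_dec c0 c1 c2 A delta sigma e l s) by lra.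
    set (D := delta ^ 2 / Rpower l (2 - 4 * sigma)).
    replace (c0 t - e * sin (2 * (l * A t)) + (e ^ 2 * U1 c0 A l t + U2 c0 c1 c2 t / l ^ 2 + e / l * U3 c0 c1 A l t) + D -
      (c0 s - e * sin (2 * (l * A s)) + (e ^ 2 * U1 c0 A l s + U2 c0 c1 c2 s / l ^ 2 + e / l * U3 c0 c1 A l s) + D))
      with ((c0 t - c0 s) + (- e) * (sin (2 * (l * A t)) - sin (2 * (l * A s))) +
            (e ^ 2 * (U1 c0 A l t - U1 c0 A l s) + / l ^ 2 * (U2 c0 c1 c2 t - U2 c0 c1 c2 s) +
             e / l * (U3 c0 c1 A l t - U3 c0 c1 A l s))) by (field; lra).
    set (X0 := c0 t - c0 s). set (Xs := sin (2 * (l * A t)) - sin (2 * (l * A s))).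
    set (X1 := U1 c0 A l t - U1 c0 A l s). set (X2 := U2 c0 c1 c2 t - U2 c0 c1 c2 s).
    set (X3 := U3 c0 c1 A l t - U3 c0 c1 A l s).
    assert (Habs : Rabs (X0 + - e * Xs + (e ^ 2 * X1 + / l ^ 2 * X2 + e / l * X3)) <=
            Rabs X0 + e * Rabs Xs + (e ^ 2 * Rabs X1 + / l ^ 2 * Rabs X2 + e / l * Rabs X3)).
    { pose proof (Rabs_triang (X0 + - e * Xs) (e ^ 2 * X1 + / l ^ 2 * X2 + e / l * X3)).
      pose proof (Rabs_triang X0 (- e * Xs)).
      pose proof (Rabs_triang (e ^ 2 * X1 + / l ^ 2 * X2) (e / l * X3)).
      pose proof (Rabs_triang (e ^ 2 * X1) (/ l ^ 2 * X2)).
      rewrite !Rabs_mult in *. rewrite Rabs_Ropp in *.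
      rewrite (Rabs_pos_eq e), (Rabs_pos_eq (e ^ 2)), (Rabs_pos_eq (/ l ^ 2)), (Rabs_pos_eq (e / l)) in *.
      all: try lra.
      all: try (apply Rdiv_le_0_compat; lra).
      all: try apply pow2_ge_0.
      left; apply Rinv_0_lt_compat, pow_lt; lra. }
    unfold q0, qs, q1, q2, q3. fold X0 Xs X1 X2 X3.
    apply (Rmult_le_reg_r ha); auto.
    replace (Rabs (X0 + - e * Xs + (e ^ 2 * X1 + / l ^ 2 * X2 + e / l * X3)) / ha * ha)
      with (Rabs (X0 + - e * Xs + (e ^ 2 * X1 + / l ^ 2 * X2 + e / l * X3))) by (field; lra).
    replace ((Rabs X0 / ha + e * (Rabs Xs / ha) + (e ^ 2 * (Rabs X1 / ha) + Rabs X2 / ha / l ^ 2 + e / l * (Rabs X3 / ha))) * ha)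
      with (Rabs X0 + e * Rabs Xs + (e ^ 2 * Rabs X1 + / l ^ 2 * Rabs X2 + e / l * Rabs X3)) by (field; lra).
    exact Habs. }
  assert (HP : e * la <= L + eta') by (unfold la; exact HN1).
  assert (HR : e ^ 2 * q1 + q2 / l ^ 2 + e / l * q3 <= eta4).
  { assert (R1 : e ^ 2 * q1 <= e * (Bb * C1)).
    { apply (Rle_trans _ (e ^ 2 * (la * C1))). apply Rmult_le_compat_l; [apply pow2_ge_0|auto].
      replace (e ^ 2 * (la * C1)) with (e * ((e * la) * C1)) by ring.
      apply Rmult_le_compat_l; [lra|]. apply Rmult_le_compat_r; lra. }
    assert (R2 : q2 / l ^ 2 <= C2 / l).
    { apply (Rle_trans _ (la * C2 / l ^ 2)).
      unfold Rdiv. apply Rmult_le_compat_r; [left; apply Rinv_0_lt_compat, pow_lt; lra|auto].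
      replace (C2 / l) with (l * C2 / l ^ 2) by (field; lra).
      unfold Rdiv. apply Rmult_le_compat_r; [left; apply Rinv_0_lt_compat, pow_lt; lra|].
      apply Rmult_le_compat_r; lra. }
    assert (R3 : e / l * q3 <= e * C3).
    { apply (Rle_trans _ (e / l * (la * C3))).
      apply Rmult_le_compat_l; [apply Rdiv_le_0_compat; lra|auto].
      replace (e / l * (la * C3)) with (e * (la / l) * C3) by (field; lra).
      apply Rmult_le_compat_r; auto. rewrite <- (Rmult_1_r e) at 2. apply Rmult_le_compat_l; [lra|].
      apply (Rmult_le_reg_r l); [lra|]. replace (la / l * l) with la by (field; lra). lra. }
    assert (R4 : e * (Bb * C1 + C3) <= eta4 / 2).
    { assert (e <= eta4 / (2 * (Bb * C1 + C3 + 1))) by lra.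
      assert (0 <= Bb * C1 + C3) by nra.
      apply (Rle_trans _ (eta4 / (2 * (Bb * C1 + C3 + 1)) * (Bb * C1 + C3))).
      apply Rmult_le_compat_r; lra.
      apply (Rmult_le_reg_r (2 * (Bb * C1 + C3 + 1))); [lra|].
      replace (eta4 / (2 * (Bb * C1 + C3 + 1)) * (Bb * C1 + C3) * (2 * (Bb * C1 + C3 + 1)))
        with (eta4 * (Bb * C1 + C3)) by (field; lra).
      unfold eta4. nra. }
    assert (R5 : C2 / l <= eta4 / 2).
    { assert (2 * C2 / eta4 < l) by (unfold L0 in Hl; lra).
      apply (Rmult_le_reg_r l); [lra|]. replace (C2 / l * l) with C2 by (field; lra).
      assert (2 * C2 / eta4 * eta4 = 2 * C2) by (unfold eta4; field; lra).
      unfold eta4 in *. nra. }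
    lra. }
  pose proof (Rmax_l H0 (2 * m2a * L)) as Mx1. pose proof (Rmax_r H0 (2 * m2a * L)) as Mx2.
  fold m2a. fold h ha in Hdec.
  destruct (Rle_lt_dec h h0) as [Hc|Hc].
  -
    assert (Q0 : q0 <= eta4).
    { eapply Rle_trans; [exact Hq0K|]. apply (Rle_trans _ (K * Rpower h0 (1 - alpha))).
      apply Rmult_le_compat_l; auto. apply Rp_le_l; lra.
      rewrite Hh0a. apply (Rmult_le_reg_r (K + 1)); [lra|].
      replace (K * (eta4 / (K + 1)) * (K + 1)) with (K * eta4) by (field; lra).
      unfold eta4. nra. }
    assert (Qs : e * qs <= 2 * m2a * L + eta4).
    { apply (Rle_trans _ (e * (2 * m2a * la))). apply Rmult_le_compat_l; lra.
      replace (e * (2 * m2a * la)) with (2 * m2a * (e * la)) by ring.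
      assert (2 * m2a * eta' <= eta4).
      { apply (Rle_trans _ (2 * m2a * (eta4 / (2 * m2a + 1)))). apply Rmult_le_compat_l; lra.
        apply (Rmult_le_reg_r (2 * m2a + 1)); [lra|].
        replace (2 * m2a * (eta4 / (2 * m2a + 1)) * (2 * m2a + 1)) with (2 * m2a * eta4) by (field; lra).
        unfold eta4; nra. }
      nra. }
    unfold eta4 in *. lra.
  -
    assert (Qs : e * qs <= eta4).
    { assert (Hh0p : 0 < Rpower h0 alpha) by apply Rpower_pos.
      assert (ha >= Rpower h0 alpha) by (apply Rle_ge, Rp_le_l; lra).
      apply (Rle_trans _ (e * (2 / ha))). apply Rmult_le_compat_l; lra.
      apply (Rle_trans _ (e * (2 / Rpower h0 alpha))).
      apply Rmult_le_compat_l; [lra|]. unfold Rdiv. apply Rmult_le_compat_l; [lra|].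
      apply Rinv_le_contravar; lra.
      assert (e <= eta4 * Rpower h0 alpha / 2) by lra.
      apply (Rle_trans _ (eta4 * Rpower h0 alpha / 2 * (2 / Rpower h0 alpha))).
      apply Rmult_le_compat_r; [|lra]. apply Rdiv_le_0_compat; lra.
      right; field; lra. }
    unfold eta4 in *. lra.
Qed.

Theorem mainTheorem8
  (mu1 mu2 alpha delta sigma : R)
  (c0 c1 c2 c3 A : R -> R)
  (lam eps : nat -> R)
  (w w1 : nat -> R -> R)
  (Hmu1 : 0 < mu1) (Hmu12 : mu1 < mu2)
  (Halpha : 0 < alpha < 1) (Hdelta : 0 <= delta) (Hsigma : 0 < sigma < 1 / 2)
  (* c0 is C^3 on [0,+oo) with derivatives c1, c2, c3 *)
  (Hc1 : forall t, 0 <= t -> deriv_nonneg c0 t (c1 t))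
  (Hc2 : forall t, 0 <= t -> deriv_nonneg c1 t (c2 t))
  (Hc3 : forall t, 0 <= t -> deriv_nonneg c2 t (c3 t))
  (Hc3cont : forall t, 0 <= t -> cont_nonneg c3 t)
  (Hbnd : forall t, 0 <= t -> mu1 <= c0 t <= mu2)
  (Hderbnd : exists K, forall t, 0 <= t ->
      Rabs (c1 t) + Rabs (c2 t) + Rabs (c3 t) <= K)
  (* A t = int_0^t c0(s)^{1/2} ds *)
  (HA0 : A 0 = 0)
  (HA : forall t, 0 <= t -> deriv_nonneg A t (sqrt (c0 t)))
  (* the sequences *)
  (Hlam : forall n, 0 < lam n) (Heps : forall n, 0 < eps n)
  (Hlaminf : cv_infty lam) (Heps0 : Un_cv eps 0)
  (Hlimsup : exists M : R, exists N : nat, forall n, (N <= n)%nat ->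
      eps n * Rpower (lam n) alpha <= M)
  (* w n solves the ODE on [0,+oo), w1 n = (w n)' *)
  (Hw : forall n t, 0 <= t -> deriv_nonneg (w n) t (w1 n t))
  (Hw1 : forall n t, 0 <= t -> deriv_nonneg (w1 n) t
      (- (2 * delta * Rpower (lam n) (2 * sigma) * w1 n t
          + lam n ^ 2 * gamma c0 c1 c2 A delta sigma (eps n) (lam n) t * w n t)))
  (Hw0 : forall n, w n 0 = 0) (Hw10 : forall n, w1 n 0 = 1) :
  let c := fun n t => gamma c0 c1 c2 A delta sigma (eps n) (lam n) t in
  let mu3 := mu1 * Rmin 1 mu1 / (2 * mu2 ^ 2) in
  let mu4 := 1 / (4 * sqrt mu2) in
  (* (i) uniform convergence on [0,+oo) *)
  (forall eta, 0 < eta -> exists N : nat, forall n, (N <= n)%nat ->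
      forall t, 0 <= t -> Rabs (c n t - c0 t) < eta) /\
  (* (ii) limsup Hold_alpha(c n) <= max{Hold_alpha(c0), 2 mu2^(alpha/2) L} *)
  (forall H0 L, is_lub (Hold_set alpha c0) H0 ->
      is_limsup (fun n => eps n * Rpower (lam n) alpha) L ->
      forall eta, 0 < eta -> exists N : nat, forall n, (N <= n)%nat ->
        forall x, Hold_set alpha (c n) x ->
          x <= Rmax H0 (2 * Rpower mu2 (alpha / 2) * L) + eta) /\
  (* (iii) energy lower bound for n large *)
  (exists N : nat, forall n, (N <= n)%nat -> forall t, 0 <= t ->
      w1 n t ^ 2 + lam n ^ 2 * w n t ^ 2 >=
      mu3 * exp (mu4 * eps n * lam n * t
                 - 2 * delta * Rpower (lam n) (2 * sigma) * t)).
Proof.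
  intros c mu3 mu4.
  destruct Hderbnd as [K HK].
  assert (HK1 : forall t, 0 <= t -> Rabs (c1 t) <= K)
    by (intros t Ht; pose proof (HK t Ht); pose proof (Rabs_pos (c2 t)); pose proof (Rabs_pos (c3 t)); lra).
  assert (HK2 : forall t, 0 <= t -> Rabs (c2 t) <= K)
    by (intros t Ht; pose proof (HK t Ht); pose proof (Rabs_pos (c1 t)); pose proof (Rabs_pos (c3 t)); lra).
  assert (HK3 : forall t, 0 <= t -> Rabs (c3 t) <= K)
    by (intros t Ht; pose proof (HK t Ht); pose proof (Rabs_pos (c1 t)); pose proof (Rabs_pos (c2 t)); lra).
  split; [|split].
  - exact (part1 mu1 mu2 delta sigma K c0 c1 c2 A lam eps Hmu1 Hsigma Hbnd HK1 HK2 Hlam Heps Hlaminf Heps0).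
  - exact (part2 mu1 mu2 alpha delta sigma K c0 c1 c2 c3 A lam eps Hmu1 Halpha Hc1 Hc2 Hc3 HA Hbnd
             HK1 HK2 HK3 Hlam Heps Hlaminf Heps0).
  - exact (part3 mu1 mu2 delta sigma K c0 c1 c2 A lam eps w w1 Hmu1 Hmu12 Hdelta Hsigma Hc1 Hc2 Hbnd
             HK1 HK2 HA0 HA Hlam Heps Hlaminf Heps0 Hw Hw1 Hw0 Hw10).
Qed.
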